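(* Let $\textnormal{R}\in\{\textnormal{ML},\textnormal{wML},\textnormal{C},\textnormal{CH}\}$, let $\varphi$ be a computable precise forecasting system, and let $\omega\in\Omega$ be a path that is $\textnormal{R}$-random for $\varphi$. Then $I_\textnormal{R}(\omega)=I_\varphi(\omega)$, where $I_\varphi(\omega)=\big[\liminf_{n\to\infty}\underline{\varphi}(\omega_{1:n}),\ \limsup_{n\to\infty}\overline{\varphi}(\omega_{1:n})\big]$.
   Context: $\mathcal{X}=\{0,1\}$; $\Omega=\mathcal{X}^{\mathbb{N}}$ is the set of paths $\omega=(\omega_1,\omega_2,\dots)$; $\mathbb{S}=\bigcup_{n\geq0}\mathcal{X}^n$ is the set of situations (finite binary strings), $\square$ the empty string, $|s|$ the length of $s$, $sx$ concatenation, $\omega_{1:n}=(\omega_1,\dots,\omega_n)$ with $\omega_{1:0}=\square$. $\mathcal{I}$ is the set of nonempty closed intervals $I\subseteq[0,1]$ (interval forecasts). A forecasting system is a map $\varphi:\mathbb{S}\to\mathcal{I}$; $\underline{\varphi}(s)=\min\varphi(s)$, $\overline{\varphi}(s)=\max\varphi(s)$; $\varphi$ is precise if $\underline\varphi=\overline\varphi$. An interval forecast $I$ is identified with the constant forecasting system $s\mapsto I$. A real map $r$ on a countable effectively encoded set $\mathcal D$ is computable if there is a recursive map $q:\mathcal{D}\times\mathbb{N}_0\to\mathbb{Q}$ with $|r(d)-q(d,n)|<2^{-n}$ for all $d,n$; it is lower semicomputable if there is a recursive $q:\mathcal{D}\times\mathbb{N}_0\to\mathbb{Q}$ with $q(d,n+1)\ge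 q(d,n)$ and $r(d)=\lim_n q(d,n)$. $\varphi$ is computable if $\underline\varphi$ and $\overline\varphi$ are computable. For a gamble $f:\mathcal X\to\mathbb R$ and $I\in\mathcal I$, $\overline{E}_I(f)=\max_{p\in I}[pf(1)+(1-p)f(0)]$. A real process $F:\mathbb S\to\mathbb R$ is a supermartingale for $\varphi$ if $\overline{E}_{\varphi(s)}\big(F(s\,\cdot)-F(s)\big)\le 0$ for all $s$; a test supermartingale if moreover $F\ge0$ and $F(\square)=1$. A multiplier process is a map $D$ from $\mathbb S$ to gambles; it generates $D^{\circledcirc}(x_1,\dots,x_n)=\prod_{k=0}^{n-1}D(x_{1:k})(x_{k+1})$; $D$ is lower semicomputable if $(s,x)\mapsto D(s)(x)$ is. Randomness notions (for a path $\omega$ and forecasting system $\varphi$): $\omega$ is ML-random for $\varphi$ if no lower semicomputable test supermartingale $T$ for $\varphi$ satisfies $\limsup_n T(\omega_{1:n})=\infty$; wML-random if no test supermartingale for $\varphi$ of the form $D^{\circledcirc}$ with $D$ a lower semicomputable multiplier process satisfies this; C-random if no computable test supermartingale for $\varphi$ satisfies this. $\omega$ is CH-random for $\varphi$ if for every recursive selection process $S:\mathbb S\to\{0,1\}$ with $\sum_{k=0}^{n-1}S(\omega_{1:k})\to\infty$ we have $\liminf_n \frac{\sum_{k=0}^{n-1}S(\omega_{1:k})[\omega_{k+1}-\underline\varphi(\omega_{1:k})]}{\sum_{k=0}^{n-1}S(\omega_{1:k})}\ge0$ and $\limsup_n \frac{\sum_{k=0}^{n-1}S(\omega_{1:k})[\omega_{k+1}-\overline\varphi(\omega_{1:k})]}{\sum_{k=0}^{n-1}S(\omega_{1:k})}\le0$.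 For a notion R, $\mathcal I_\textnormal{R}(\omega)=\{I\in\mathcal I:\omega \text{ is R-random for } I\}$ and $I_\textnormal{R}(\omega)=\bigcap_{I\in\mathcal I_\textnormal{R}(\omega)} I$. *)

(* Defs.v *)
From Stdlib Require Import Reals Lra Lia ZArith List.
From Coquelicot Require Import Coquelicot.
Import ListNotations.
Open Scope R_scope.

Inductive prf : Type :=
| PZero : prf
| PSucc : prf
| PProj : nat -> prf
| PComp : prf -> list prf -> prf
| PPrec : prf -> prf -> prf         (* primitive recursion on first argument *)
| PMu   : prf -> prf.               (* unbounded minimisation on first argument *)

(* big-step semantics: [peval f args y] means f(args) is defined and = y *)
Inductive peval : prf -> list nat -> nat -> Prop :=
| ev_zero : forall v, peval PZero v 0
| ev_succ : forall x v, peval PSucc (x :: v) (S x)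
| ev_proj : forall i v, peval (PProj i) v (nth i v 0%nat)
| ev_comp : forall f gs v ys y,
    Forall2 (fun g yg => peval g v yg) gs ys ->
    peval f ys y -> peval (PComp f gs) v y
| ev_prec0 : forall f g v y, peval f v y -> peval (PPrec f g) (0%nat :: v) y
| ev_precS : forall f g n v r y,
    peval (PPrec f g) (n :: v) r -> peval g (n :: r :: v) y ->
    peval (PPrec f g) (S n :: v) y
| ev_mu : forall f v n,
    peval f (n :: v) 0%nat ->
    (forall m, (m < n)%nat -> exists k, peval f (m :: v) (S k)) ->
    peval (PMu f) v n.

Definition recursive_nat (h : nat -> nat) : Prop :=
  exists t : prf, forall n, peval t [n] (h n).

Definition npair (a b : nat) : nat := (((a + b) * (a + b + 1)) / 2 + b)%nat.

(* situations (finite binary strings) as nat: a bijection *)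
Fixpoint code_sit (s : list bool) : nat :=
  match s with
  | [] => 0%nat
  | x :: s' => (2 * code_sit s' + (if x then 2 else 1))%nat
  end.

Definition b2n (x : bool) : nat := if x then 1%nat else 0%nat.

(* zig-zag bijection nat -> Z *)
Definition zz (m : nat) : Z :=
  if Nat.even m then Z.of_nat (m / 2) else (- Z.of_nat ((m + 1) / 2))%Z.

Definition qval (num den : nat) : R := IZR (zz num) / INR (S den).

(* (code : D -> nat is the effective encoding of D)                    *)

(* a recursive map q : D x N -> Q, given by recursive numerator/denominator codes *)
Definition recursive_Q {D : Type} (code : D -> nat) (q : D -> nat -> R) : Prop :=
  exists hn hd : nat -> nat, recursive_nat hn /\ recursive_nat hd /\
    forall d n, q d n = qval (hn (npair (code d) n)) (hd (npair (code d) n)).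

Definition computable_map {D : Type} (code : D -> nat) (r : D -> R) : Prop :=
  exists q : D -> nat -> R, recursive_Q code q /\
    forall d n, Rabs (r d - q d n) < / 2 ^ n.

Definition lower_semicomputable {D : Type} (code : D -> nat) (r : D -> R) : Prop :=
  exists q : D -> nat -> R, recursive_Q code q /\
    (forall d n, q d n <= q d (S n)) /\
    (forall d, Un_cv (q d) (r d)).

(* a path omega = (omega_1, omega_2, ...) is [om : nat -> bool] with omega_{k+1} = om k *)
Definition prefix (om : nat -> bool) (n : nat) : list bool := map om (seq 0 n).

(* a forecasting system phi is given by its lower and upper maps;
   phi(s) = [lo s, hi s] must be a nonempty closed subinterval of [0,1] *)
Definition is_FS (lo hi : list bool -> R) : Prop :=
  forall s, 0 <= lo s /\ lo s <= hi s /\ hi s <= 1.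

Definition precise (lo hi : list bool -> R) : Prop := forall s, lo s = hi s.

Definition computable_FS (lo hi : list bool -> R) : Prop :=
  computable_map code_sit lo /\ computable_map code_sit hi.

(* upper expectation  E_I(f) = max_{p in I} [p f(1) + (1-p) f(0)] *)
(* "E_[a,b](f) <= 0" written out: every p in [a,b] gives a value <= 0 *)
Definition upper_exp_le0 (a b : R) (f : bool -> R) : Prop :=
  forall p, a <= p <= b -> p * f true + (1 - p) * f false <= 0.

Definition supermartingale (lo hi : list bool -> R) (F : list bool -> R) : Prop :=
  forall s, upper_exp_le0 (lo s) (hi s) (fun x => F (s ++ [x]) - F s).

Definition test_supermartingale (lo hi : list bool -> R) (T : list bool -> R) : Prop :=
  supermartingale lo hi T /\ (forall s, 0 <= T s) /\ T [] = 1.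

Definition Dcirc (D : list bool -> bool -> R) (s : list bool) : R :=
  fold_right (fun k acc => D (firstn k s) (nth k s false) * acc) 1
             (seq 0 (length s)).

Definition code_sx (p : list bool * bool) : nat := npair (code_sit (fst p)) (b2n (snd p)).

Definition lsc_multiplier (D : list bool -> bool -> R) : Prop :=
  lower_semicomputable code_sx (fun p => D (fst p) (snd p)).

Definition unbounded_on (T : list bool -> R) (om : nat -> bool) : Prop :=
  LimSup_seq (fun n => T (prefix om n)) = p_infty.

Definition ML_random (lo hi : list bool -> R) (om : nat -> bool) : Prop :=
  ~ exists T, lower_semicomputable code_sit T /\ test_supermartingale lo hi T /\
              unbounded_on T om.

Definition wML_random (lo hi : list bool -> R) (om : nat -> bool) : Prop :=
  ~ exists D, lsc_multiplier D /\ test_supermartingale lo hi (Dcirc D) /\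
              unbounded_on (Dcirc D) om.

Definition C_random (lo hi : list bool -> R) (om : nat -> bool) : Prop :=
  ~ exists T, computable_map code_sit T /\ test_supermartingale lo hi T /\
              unbounded_on T om.

Definition recursive_selection (S : list bool -> bool) : Prop :=
  exists h : nat -> nat, recursive_nat h /\ forall s, h (code_sit s) = b2n (S s).

Definition sel (S : list bool -> bool) (s : list bool) : R := if S s then 1 else 0.

Definition sel_count (S : list bool -> bool) (om : nat -> bool) (n : nat) : R :=
  fold_right Rplus 0 (map (fun k => sel S (prefix om k)) (seq 0 n)).

Definition sel_sum (S : list bool -> bool) (f : list bool -> R) (om : nat -> bool)
  (n : nat) : R :=
  fold_right Rplus 0
    (map (fun k => sel S (prefix om k) * ((if om k then 1 else 0) - f (prefix om k)))
         (seq 0 n)).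

Definition CH_random (lo hi : list bool -> R) (om : nat -> bool) : Prop :=
  forall S, recursive_selection S ->
    is_lim_seq (sel_count S om) p_infty ->
    Rbar_le (Finite 0) (LimInf_seq (fun n => sel_sum S lo om n / sel_count S om n)) /\
    Rbar_le (LimSup_seq (fun n => sel_sum S hi om n / sel_count S om n)) (Finite 0).

Inductive notion := ML | wML | C | CH.

Definition random (Rn : notion) (lo hi : list bool -> R) (om : nat -> bool) : Prop :=
  match Rn with
  | ML => ML_random lo hi om
  | wML => wML_random lo hi om
  | C => C_random lo hi om
  | CH => CH_random lo hi om
  end.

(* interval forecast [a,b] (0 <= a <= b <= 1) seen as a constant forecasting system;
   I_R(om) = intersection of all [a,b] for which om is R-random: membership of x *)
Definition in_I_R (Rn : notion) (om : nat -> bool) (x : R) : Prop :=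
  forall a b, 0 <= a -> a <= b -> b <= 1 ->
    random Rn (fun _ => a) (fun _ => b) om -> a <= x <= b.

Definition in_I_phi (lo hi : list bool -> R) (om : nat -> bool) (x : R) : Prop :=
  Rbar_le (LimInf_seq (fun n => lo (prefix om n))) (Finite x) /\
  Rbar_le (Finite x) (LimSup_seq (fun n => hi (prefix om n))).

(* Main.v *)
Require Import Defs.
From Stdlib Require Import Reals List.
From Coquelicot Require Import Coquelicot.
From Stdlib Require Import Arith Lia Lra ZArith Bool Classical.
Import ListNotations.
Open Scope nat_scope.

Definition PR (F : list nat -> nat) := exists t, forall v, peval t v (F v).

Lemma PR_ext F G : PR F -> (forall v, F v = G v) -> PR G.
Proof. intros [t Ht] E; exists t; intro v; rewrite <- E; auto. Qed.

Lemma PR_const0 : PR (fun _ => 0).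
Proof. exists PZero; intros; constructor. Qed.

Lemma PR_proj i : PR (fun v => nth i v 0).
Proof. exists (PProj i); intros; constructor. Qed.

Lemma PR_succ : PR (fun v => S (nth 0 v 0)).
Proof.
  exists (PComp PSucc [PProj 0]); intros v.
  eapply ev_comp with (ys := [nth 0 v 0]).
  - constructor; [constructor| constructor].
  - constructor.
Qed.

Lemma PR_comp1 F G : PR F -> PR G -> PR (fun v => F [G v]).
Proof.
  intros [f Hf] [g Hg]; exists (PComp f [g]); intro v.
  eapply ev_comp with (ys := [G v]); auto.
Qed.

Lemma PR_comp2 F G1 G2 : PR F -> PR G1 -> PR G2 -> PR (fun v => F [G1 v; G2 v]).
Proof.
  intros [f Hf] [g1 H1] [g2 H2]; exists (PComp f [g1; g2]); intro v.
  eapply ev_comp with (ys := [G1 v; G2 v]); auto.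
Qed.

Lemma PR_comp3 F G1 G2 G3 : PR F -> PR G1 -> PR G2 -> PR G3 ->
  PR (fun v => F [G1 v; G2 v; G3 v]).
Proof.
  intros [f Hf] [g1 H1] [g2 H2] [g3 H3]; exists (PComp f [g1; g2; g3]); intro v.
  eapply ev_comp with (ys := [G1 v; G2 v; G3 v]); auto.
Qed.

Fixpoint rec1 (F G : list nat -> nat) (n y : nat) : nat :=
  match n with 0 => F [y] | S n' => G [n'; rec1 F G n' y; y] end.

Lemma PR_rec1 F G : PR F -> PR G -> PR (fun v => rec1 F G (nth 0 v 0) (nth 1 v 0)).
Proof.
  intros [f Hf] [g Hg].
  assert (K : forall n y, peval (PPrec f g) [n; y] (rec1 F G n y)).
  { induction n; intros y; simpl.
    - constructor; auto.
    - eapply ev_precS; eauto. }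
  exists (PComp (PPrec f g) [PProj 0; PProj 1]); intro v.
  eapply ev_comp with (ys := [nth 0 v 0; nth 1 v 0]); auto.
  repeat constructor.
Qed.

Definition PR1 (f : nat -> nat) := PR (fun v => f (nth 0 v 0)).
Definition PR2 (f : nat -> nat -> nat) := PR (fun v => f (nth 0 v 0) (nth 1 v 0)).
Definition PR3 (f : nat -> nat -> nat -> nat) :=
  PR (fun v => f (nth 0 v 0) (nth 1 v 0) (nth 2 v 0)).

Lemma PR1_app f A : PR1 f -> PR A -> PR (fun v => f (A v)).
Proof. intros Hf HA; eapply PR_ext; [apply (PR_comp1 _ _ Hf HA)|]; reflexivity. Qed.
Lemma PR2_app f A B : PR2 f -> PR A -> PR B -> PR (fun v => f (A v) (B v)).
Proof. intros Hf HA HB; eapply PR_ext; [apply (PR_comp2 _ _ _ Hf HA HB)|]; reflexivity. Qed.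
Lemma PR3_app f A B C : PR3 f -> PR A -> PR B -> PR C -> PR (fun v => f (A v) (B v) (C v)).
Proof. intros Hf HA HB HC; eapply PR_ext; [apply (PR_comp3 _ _ _ _ Hf HA HB HC)|]; reflexivity. Qed.

Lemma PR_const c : PR (fun _ => c).
Proof.
  induction c.
  - apply PR_const0.
  - eapply PR_ext; [apply (PR_comp1 _ _ PR_succ IHc)|]; reflexivity.
Qed.

Lemma PR1_S : PR1 S.
Proof. exact PR_succ. Qed.

Create HintDb prdb.
Hint Resolve PR1_S : prdb.

Ltac pr0 :=
  match goal with
  | |- PR (fun v => nth ?i v 0) => apply PR_proj
  | |- PR (fun _ => ?c) => apply PR_const
  | |- PR (fun v => ?f (@?A v) (@?B v) (@?C v)) =>
      apply (PR3_app f); [solve [eauto with prdb] | pr0 | pr0 | pr0]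
  | |- PR (fun v => ?f (@?A v) (@?B v)) =>
      apply (PR2_app f); [solve [eauto with prdb] | pr0 | pr0]
  | |- PR (fun v => ?f (@?A v)) =>
      apply (PR1_app f); [solve [eauto with prdb] | pr0]
  end.


Ltac prrec F G :=
  let H := fresh in
  assert (H : PR (fun v => rec1 F G (nth 0 v 0) (nth 1 v 0)))
    by (apply PR_rec1; pr0);
  eapply PR_ext; [exact H|]; intro v; simpl.

Lemma PR2_add : PR2 Nat.add.
Proof.
  unfold PR2. prrec (fun v : list nat => nth 0 v 0) (fun v : list nat => S (nth 1 v 0)).
  generalize (nth 0 v 0) (nth 1 v 0); induction n; intros; simpl; auto.
Qed.
Hint Resolve PR2_add : prdb.

Lemma PR2_of_rec F G f : PR F -> PR G -> (forall n y, rec1 F G n y = f n y) -> PR2 f.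
Proof.
  intros HF HG E. eapply PR_ext; [apply (PR_rec1 F G HF HG)|]. intros; apply E.
Qed.
Lemma PR2_of_rec_sw F G f : PR F -> PR G -> (forall n y, rec1 F G n y = f y n) -> PR2 f.
Proof.
  intros HF HG E.
  assert (H2 : PR2 (rec1 F G)) by (apply PR_rec1; auto).
  unfold PR2. eapply PR_ext.
  - apply (PR2_app _ (fun v => nth 1 v 0) (fun v => nth 0 v 0) H2); apply PR_proj.
  - intros; simpl; apply E.
Qed.
Lemma PR1_of_rec F G f : PR F -> PR G -> (forall n, rec1 F G n 0 = f n) -> PR1 f.
Proof.
  intros HF HG E.
  assert (H2 : PR2 (rec1 F G)) by (apply PR_rec1; auto).
  unfold PR1. eapply PR_ext.
  - apply (PR2_app _ (fun v => nth 0 v 0) (fun v => 0) H2); [apply PR_proj | apply PR_const].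
  - intros; simpl; apply E.
Qed.

Lemma PR2_mul : PR2 Nat.mul.
Proof.
  apply (PR2_of_rec (fun _ => 0) (fun v => nth 1 v 0 + nth 2 v 0)); try pr0.
  induction n; intros; simpl; auto. rewrite IHn; lia.
Qed.
Hint Resolve PR2_mul : prdb.

Lemma PR1_pred : PR1 Nat.pred.
Proof.
  apply (PR1_of_rec (fun _ => 0) (fun v => nth 0 v 0)); try pr0.
  destruct n; reflexivity.
Qed.
Hint Resolve PR1_pred : prdb.

Lemma PR2_sub : PR2 Nat.sub.
Proof.
  apply (PR2_of_rec_sw (fun v => nth 0 v 0) (fun v => Nat.pred (nth 1 v 0))); try pr0.
  induction n; intros; simpl. lia. rewrite IHn; lia.
Qed.
Hint Resolve PR2_sub : prdb.

Lemma PR2_pow : PR2 Nat.pow.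
Proof.
  apply (PR2_of_rec_sw (fun _ => 1) (fun v => nth 1 v 0 * nth 2 v 0)); try pr0.
  induction n; intros; simpl; auto. rewrite IHn; lia.
Qed.
Hint Resolve PR2_pow : prdb.

Fixpoint bsum (f : nat -> nat -> nat) (n y : nat) : nat :=
  match n with 0 => 0 | S n' => bsum f n' y + f n' y end.

Lemma PR2_bsum f : PR2 f -> PR2 (bsum f).
Proof.
  intro Hf.
  apply (PR2_of_rec (fun _ => 0) (fun v => nth 1 v 0 + f (nth 0 v 0) (nth 2 v 0))).
  - pr0.
  - apply (PR2_app Nat.add); [exact PR2_add | pr0 |].
    apply (PR2_app f); [exact Hf| pr0 | pr0].
  - induction n; intros; simpl; auto.
Qed.

Fixpoint iter_from (g : nat -> nat) (n y : nat) : nat :=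
  match n with 0 => y | S n' => g (iter_from g n' y) end.

Lemma PR2_iter g : PR1 g -> PR2 (iter_from g).
Proof.
  intro Hg.
  apply (PR2_of_rec (fun v => nth 0 v 0) (fun v => g (nth 1 v 0))).
  - pr0.
  - apply (PR1_app g); [exact Hg| pr0].
  - induction n; intros; simpl; auto.
Qed.

Definition sg (x : nat) : nat := 1 - (1 - x).
Lemma PR1_sg : PR1 sg.
Proof. unfold PR1, sg. pr0. Qed.
Hint Resolve PR1_sg : prdb.
Lemma sg_spec x : sg x = if x =? 0 then 0 else 1.
Proof. unfold sg; destruct x; simpl; lia. Qed.

Definition ltn (x y : nat) : nat := sg (y - x).
Lemma PR2_ltn : PR2 ltn.
Proof. unfold PR2, ltn. pr0. Qed.
Hint Resolve PR2_ltn : prdb.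
Lemma ltn_spec x y : ltn x y = if x <? y then 1 else 0.
Proof.
  unfold ltn; rewrite sg_spec.
  destruct (Nat.ltb_spec x y); destruct (Nat.eqb_spec (y - x) 0); lia.
Qed.

Definition eqn (x y : nat) : nat := 1 - sg ((x - y) + (y - x)).
Lemma PR2_eqn : PR2 eqn.
Proof. unfold PR2, eqn. pr0. Qed.
Hint Resolve PR2_eqn : prdb.
Lemma eqn_spec x y : eqn x y = if x =? y then 1 else 0.
Proof.
  unfold eqn; rewrite sg_spec.
  destruct (Nat.eqb_spec x y); destruct (Nat.eqb_spec (x - y + (y - x)) 0); lia.
Qed.

Definition cond (b x y : nat) : nat := b * x + (1 - b) * y.
Lemma PR3_cond : PR3 cond.
Proof. unfold PR3, cond. pr0. Qed.
Hint Resolve PR3_cond : prdb.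


Ltac pr :=
  match goal with
  | |- PR (fun v => nth ?i v 0) => apply PR_proj
  | |- PR (fun _ => ?c) => apply PR_const
  | |- PR (fun v => bsum ?f (@?A v) (@?B v)) =>
      apply (PR2_app (bsum f)); [apply PR2_bsum; unfold PR2; cbv beta; pr | pr | pr]
  | |- PR (fun v => iter_from ?f (@?A v) (@?B v)) =>
      apply (PR2_app (iter_from f)); [apply PR2_iter; unfold PR1; cbv beta; pr | pr | pr]
  | |- PR (fun v => ?f (@?A v) (@?B v) (@?C v)) =>
      apply (PR3_app f); [solve [eauto with prdb] | pr | pr | pr]
  | |- PR (fun v => ?f (@?A v) (@?B v)) =>
      apply (PR2_app f); [solve [eauto with prdb] | pr | pr]
  | |- PR (fun v => ?f (@?A v)) =>
      apply (PR1_app f); [solve [eauto with prdb] | pr]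
  end.




Ltac d2 x := let H1 := fresh in let H2 := fresh in
  pose proof (Nat.div_mod x 2 ltac:(lia)) as H1; pose proof (Nat.mod_upper_bound x 2 ltac:(lia)) as H2;
  revert H1 H2; generalize (x / 2) (x mod 2); intros.

Definition div2s (x : nat) : nat := bsum (fun j x => ltn (2 * j + 1) x) x x.
Lemma PR1_div2s : PR1 div2s.
Proof. unfold PR1, div2s. pr. Qed.

Lemma bsum_div2 n x : bsum (fun j x => ltn (2 * j + 1) x) n x = Nat.min n (x / 2).
Proof.
  induction n; cbn [bsum]; auto.
  rewrite IHn, ltn_spec.
  assert (E : (S n <= x / 2) <-> (2 * n + 1 < x)) by (d2 x; lia).
  destruct (Nat.ltb_spec (2*n+1) x); lia.
Qed.

Lemma div2s_spec x : div2s x = x / 2.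
Proof. unfold div2s; rewrite bsum_div2. d2 x; lia. Qed.

Lemma PR1_div2 : PR1 (fun x => x / 2).
Proof. eapply PR_ext; [apply PR1_div2s|]. intros; apply div2s_spec. Qed.
Hint Resolve PR1_div2 : prdb.

Lemma PR2_div2' : PR1 (fun x => Nat.div x 2).
Proof. exact PR1_div2. Qed.

Ltac prd :=
  match goal with
  | |- PR (fun v => nth ?i v 0) => apply PR_proj
  | |- PR (fun _ => ?c) => apply PR_const
  | |- PR (fun v => Nat.div (@?A v) 2) => apply (PR1_app (fun x => x / 2)); [exact PR1_div2 | prd]
  | |- PR (fun v => bsum ?f (@?A v) (@?B v)) =>
      apply (PR2_app (bsum f)); [apply PR2_bsum; unfold PR2; cbv beta; prd | prd | prd]
  | |- PR (fun v => iter_from ?f (@?A v) (@?B v)) =>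
      apply (PR2_app (iter_from f)); [apply PR2_iter; unfold PR1; cbv beta; prd | prd | prd]
  | |- PR (fun v => ?f (@?A v) (@?B v) (@?C v)) =>
      apply (PR3_app f); [solve [eauto with prdb] | prd | prd | prd]
  | |- PR (fun v => ?f (@?A v) (@?B v)) =>
      apply (PR2_app f); [solve [eauto with prdb] | prd | prd]
  | |- PR (fun v => ?f (@?A v)) =>
      apply (PR1_app f); [solve [eauto with prdb] | prd]
  end.

Lemma PR2_npair : PR2 npair.
Proof. unfold PR2, npair. prd. Qed.
Hint Resolve PR2_npair : prdb.

Definition tri (k : nat) : nat := k * (k + 1) / 2.
Lemma tri0 : tri 0 = 0. Proof. reflexivity. Qed.
Lemma triS k : tri (S k) = tri k + S k.
Proof.
  unfold tri.
  replace (S k * (S k + 1)) with (k * (k + 1) + S k * 2) by lia.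
  rewrite Nat.div_add by lia. reflexivity.
Qed.
Lemma tri_mono j k : j <= k -> tri j <= tri k.
Proof. induction 1; auto. rewrite triS; lia. Qed.
Lemma tri_ge k : k <= tri k.
Proof. induction k; auto. rewrite triS; lia. Qed.

Lemma PR1_tri : PR1 tri.
Proof.
  unfold PR1, tri. prd.
Qed.
Hint Resolve PR1_tri : prdb.

Lemma npair_tri a b : npair a b = tri (a + b) + b.
Proof. reflexivity. Qed.

Definition unp_k (m : nat) : nat := bsum (fun j m => 1 - ltn m (tri (j + 1))) m m.
Definition unp1 (m : nat) : nat := unp_k m - (m - tri (unp_k m)).
Definition unp2 (m : nat) : nat := m - tri (unp_k m).

Lemma PR1_unp1 : PR1 unp1.
Proof. unfold PR1, unp1, unp_k. prd. Qed.
Lemma PR1_unp2 : PR1 unp2.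
Proof. unfold PR1, unp2, unp_k. prd. Qed.
Hint Resolve PR1_unp1 PR1_unp2 : prdb.

Lemma bsum_count (f : nat -> nat -> nat) K y n :
  (forall j, j < n -> f j y = if j <? K then 1 else 0) -> bsum f n y = Nat.min n K.
Proof.
  induction n; intros H; cbn [bsum]; auto.
  rewrite IHn by (intros; apply H; lia). rewrite H by lia.
  destruct (Nat.ltb_spec n K); lia.
Qed.

Lemma unp_k_npair a b : unp_k (npair a b) = a + b.
Proof.
  unfold unp_k. rewrite (bsum_count _ (a + b)).
  - rewrite npair_tri. pose proof (tri_ge (a+b)); lia.
  - intros j Hj. rewrite ltn_spec. rewrite npair_tri.
    destruct (Nat.ltb_spec j (a + b)).
    + assert (tri (j+1) <= tri (a+b)) by (apply tri_mono; lia).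
      destruct (Nat.ltb_spec (tri (a + b) + b) (tri (j + 1))); lia.
    + assert (tri (a+b+1) <= tri (j+1)) by (apply tri_mono; lia).
      replace (a+b+1) with (S (a+b)) in H0 by lia. rewrite triS in H0.
      destruct (Nat.ltb_spec (tri (a + b) + b) (tri (j + 1))); lia.
Qed.

Lemma unp1_npair a b : unp1 (npair a b) = a.
Proof. unfold unp1. rewrite unp_k_npair, npair_tri. lia. Qed.
Lemma unp2_npair a b : unp2 (npair a b) = b.
Proof. unfold unp2. rewrite unp_k_npair, npair_tri. lia. Qed.

Lemma div2_eq x q : 2*q <= x < 2*q+2 -> x/2 = q.
Proof. intros. d2 x. lia. Qed.

Definition rest (r : nat) : nat := (r - 1) / 2.
Lemma PR1_rest : PR1 rest. Proof. unfold PR1, rest. prd. Qed.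
Hint Resolve PR1_rest : prdb.

Definition restk (k m : nat) : nat := iter_from rest k m.
Lemma PR2_restk : PR2 restk. Proof. unfold PR2, restk. prd. Qed.
Hint Resolve PR2_restk : prdb.

Lemma rest_cons x s : rest (code_sit (x :: s)) = code_sit s.
Proof.
  unfold rest; cbn [code_sit]. apply div2_eq. destruct x; lia.
Qed.

Lemma iter_from_S' g k y : iter_from g (S k) y = iter_from g k (g y).
Proof. induction k; simpl; auto. Qed.

Lemma restk_spec k s : restk k (code_sit s) = code_sit (skipn k s).
Proof.
  unfold restk. revert s; induction k; intros s; auto.
  rewrite iter_from_S'. destruct s as [|x s].
  - simpl skipn. replace (rest (code_sit [])) with (code_sit []) by reflexivity.
    rewrite IHk. destruct k; reflexivity.
  - rewrite rest_cons, IHk. reflexivity.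
Qed.

Lemma code_len s : length s <= code_sit s.
Proof. induction s as [|x s IH]; simpl; auto. destruct x; lia. Qed.

Lemma code_pos s : code_sit s = 0 -> s = [].
Proof. destruct s as [|x s]; simpl; auto. destruct x; lia. Qed.

Definition len (m : nat) : nat := bsum (fun k m => sg (restk k m)) m m.
Lemma PR1_len : PR1 len. Proof. unfold PR1, len. prd. Qed.
Hint Resolve PR1_len : prdb.

Lemma len_spec s : len (code_sit s) = length s.
Proof.
  unfold len. rewrite (bsum_count _ (length s)).
  - pose proof (code_len s); lia.
  - intros j _. rewrite sg_spec, restk_spec.
    destruct (Nat.ltb_spec j (length s)).
    + destruct (Nat.eqb_spec (code_sit (skipn j s)) 0); auto.
      apply code_pos in e. apply (f_equal (@length bool)) in e.
      rewrite length_skipn in e. simpl in e. lia.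
    + rewrite skipn_all2 by lia. reflexivity.
Qed.

Lemma nth_skipn0 {A} k (s : list A) d : nth k s d = nth 0 (skipn k s) d.
Proof. revert s; induction k; intros [|x s]; simpl; auto. Qed.

Definition mod2 (x : nat) : nat := x - 2 * (x / 2).
Definition digit (k m : nat) : nat := 1 - mod2 (restk k m).
Lemma PR2_digit : PR2 digit. Proof. unfold PR2, digit, mod2. prd. Qed.
Hint Resolve PR2_digit : prdb.

Lemma digit_spec k s : k < length s -> digit k (code_sit s) = b2n (nth k s false).
Proof.
  intros Hk. unfold digit, mod2. rewrite restk_spec.
  rewrite nth_skipn0.
  destruct (skipn k s) as [|x t] eqn:E.
  - apply (f_equal (@length bool)) in E. rewrite length_skipn in E. simpl in E. lia.
  - cbn [code_sit nth]. destruct x; simpl b2n.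
    + rewrite (div2_eq _ (code_sit t + 1)) by lia. lia.
    + rewrite (div2_eq _ (code_sit t)) by lia. lia.
Qed.

Lemma code_split k s : code_sit s = code_sit (firstn k s) + 2 ^ k * code_sit (skipn k s).
Proof.
  revert s; induction k; intros s; simpl. lia.
  destruct s as [|x s]; simpl. lia.
  rewrite (IHk s). destruct x; lia.
Qed.

Definition pcode (m k : nat) : nat := m - 2 ^ k * restk k m.
Lemma PR2_pcode : PR2 pcode. Proof. unfold PR2, pcode. prd. Qed.
Hint Resolve PR2_pcode : prdb.
Lemma pcode_spec k s : pcode (code_sit s) k = code_sit (firstn k s).
Proof. unfold pcode. rewrite restk_spec. rewrite (code_split k s) at 1. lia. Qed.

Lemma bsum_seq f n y : bsum f n y = list_sum (map (fun k => f k y) (seq 0 n)).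
Proof.
  induction n; auto. rewrite seq_S, map_app, list_sum_app. cbn [bsum]. rewrite IHn.
  simpl. lia.
Qed.

Open Scope R_scope.

Lemma rec_PR1 h : recursive_nat h -> PR1 h.
Proof.
  intros [t Ht]. exists (PComp t [PProj 0]). intro v.
  eapply ev_comp with (ys := [nth 0 v 0%nat]); auto. repeat constructor.
Qed.
Lemma PR1_rec h : PR1 h -> recursive_nat h.
Proof. intros [t Ht]. exists t. intro n. apply (Ht [n]). Qed.

Lemma zz_even X : zz (2 * X)%nat = Z.of_nat X.
Proof.
  unfold zz. rewrite Nat.even_mul.
  replace (Nat.even 2 || Nat.even X)%bool with true by reflexivity.
  rewrite Nat.mul_comm, Nat.div_mul by lia. reflexivity.
Qed.

Lemma qval_nat X Y : (1 <= Y)%nat -> qval (2 * X)%nat (Y - 1)%nat = INR X / INR Y.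
Proof.
  intros HY. unfold qval. rewrite zz_even, <- INR_IZR_INZ.
  replace (S (Y - 1)) with Y by lia. reflexivity.
Qed.

Definition exactQ {D : Type} (code : D -> nat) (r : D -> R) : Prop :=
  exists hn hd : nat -> nat, recursive_nat hn /\ recursive_nat hd /\
    forall d n, r d = qval (hn (npair (code d) n)) (hd (npair (code d) n)).

Lemma exact_lsc {D : Type} (code : D -> nat) r : exactQ code r -> lower_semicomputable code r.
Proof.
  intros [hn [hd [H1 [H2 H3]]]]. exists (fun d _ => r d). split; [|split].
  - exists hn, hd. split; [|split]; auto.
  - intros; lra.
  - intros d e He. exists 0%nat. intros. unfold R_dist. rewrite Rminus_diag, Rabs_R0. auto.
Qed.

Lemma exact_comp {D : Type} (code : D -> nat) r : exactQ code r -> computable_map code r.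
Proof.
  intros [hn [hd [H1 [H2 H3]]]]. exists (fun d _ => r d). split.
  - exists hn, hd. split; [|split]; auto.
  - intros. rewrite Rminus_diag, Rabs_R0. apply Rinv_0_lt_compat, pow_lt; lra.
Qed.

Lemma exactQ_of {D : Type} (code : D -> nat) r (N M : nat -> nat) :
  PR1 N -> PR1 M -> (forall d, 1 <= M (code d))%nat ->
  (forall d, r d = INR (N (code d)) / INR (M (code d))) -> exactQ code r.
Proof.
  intros HN HM Hpos Hr.
  exists (fun P => 2 * N (unp1 P))%nat, (fun P => M (unp1 P) - 1)%nat.
  split; [|split].
  - apply PR1_rec. unfold PR1. prd.
  - apply PR1_rec. unfold PR1. prd.
  - intros d n. rewrite unp1_npair, qval_nat; auto.
Qed.

Definition Dsel (S : list bool -> bool) (al be : R) : list bool -> bool -> R :=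
  fun s x => if S s then (if x then al else be) else 1.

Lemma fold_mult_acc (g : nat -> R) (a : R) l :
  fold_right (fun k acc => g k * acc) a l = fold_right (fun k acc => g k * acc) 1 l * a.
Proof. induction l; simpl; [lra|]. rewrite IHl; lra. Qed.

Lemma fold_ext_in (g h : nat -> R) a l : (forall k, In k l -> g k = h k) ->
  fold_right (fun k acc => g k * acc) a l = fold_right (fun k acc => h k * acc) a l.
Proof. induction l; simpl; intros; auto. rewrite H, IHl; auto. Qed.

Lemma Dcirc_app D s x : Dcirc D (s ++ [x]) = Dcirc D s * D s x.
Proof.
  unfold Dcirc. rewrite length_app. simpl length. rewrite Nat.add_1_r, seq_S, fold_right_app.
  simpl fold_right at 2. rewrite fold_mult_acc.
  rewrite firstn_app, firstn_all2 by lia. rewrite Nat.sub_diag, firstn_O, app_nil_r.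
  rewrite app_nth2 by lia. rewrite Nat.sub_diag. simpl nth. rewrite Rmult_1_r.
  f_equal. apply fold_ext_in. intros k Hk. apply in_seq in Hk.
  rewrite firstn_app. replace (k - length s)%nat with 0%nat by lia. rewrite firstn_O, app_nil_r.
  rewrite app_nth1 by lia. reflexivity.
Qed.

Lemma Dcirc_nil D : Dcirc D [] = 1.
Proof. reflexivity. Qed.

Definition c1 (S : list bool -> bool) (s : list bool) (l : list nat) : nat :=
  list_sum (map (fun k => b2n (S (firstn k s)) * b2n (nth k s false))%nat l).
Definition c0 (S : list bool -> bool) (s : list bool) (l : list nat) : nat :=
  list_sum (map (fun k => b2n (S (firstn k s)) * (1 - b2n (nth k s false)))%nat l).

Lemma Dsel_fold S al be s l :
  fold_right (fun k acc => Dsel S al be (firstn k s) (nth k s false) * acc) 1 l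
  = al ^ (c1 S s l) * be ^ (c0 S s l).
Proof.
  induction l as [|k l IH]; simpl; [lra|]. rewrite IH. unfold c1, c0 in *. simpl.
  unfold Dsel. destruct (S (firstn k s)); destruct (nth k s false); simpl;
  rewrite ?pow_add; simpl; ring.
Qed.

Lemma Dcirc_Dsel S al be s :
  Dcirc (Dsel S al be) s = al ^ (c1 S s (seq 0 (length s))) * be ^ (c0 S s (seq 0 (length s))).
Proof. apply Dsel_fold. Qed.

Definition N1 (hS : nat -> nat) (m : nat) : nat :=
  bsum (fun k m => hS (pcode m k) * digit k m)%nat (len m) m.
Definition N0 (hS : nat -> nat) (m : nat) : nat :=
  bsum (fun k m => hS (pcode m k) * (1 - digit k m))%nat (len m) m.

Lemma N1_spec hS S s : (forall s, hS (code_sit s) = b2n (S s)) ->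
  N1 hS (code_sit s) = c1 S s (seq 0 (length s)).
Proof.
  intros HS. unfold N1, c1. rewrite bsum_seq, len_spec. f_equal.
  apply map_ext_in. intros k Hk. apply in_seq in Hk.
  rewrite pcode_spec, HS, digit_spec by lia. reflexivity.
Qed.
Lemma N0_spec hS S s : (forall s, hS (code_sit s) = b2n (S s)) ->
  N0 hS (code_sit s) = c0 S s (seq 0 (length s)).
Proof.
  intros HS. unfold N0, c0. rewrite bsum_seq, len_spec. f_equal.
  apply map_ext_in. intros k Hk. apply in_seq in Hk.
  rewrite pcode_spec, HS, digit_spec by lia. reflexivity.
Qed.

Lemma Dsel_exact S hS a1 b1 a0 b0 :
  PR1 hS -> (forall s, hS (code_sit s) = b2n (S s)) -> (1 <= b1)%nat -> (1 <= b0)%nat ->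
  exactQ code_sit (Dcirc (Dsel S (INR a1 / INR b1) (INR a0 / INR b0))).
Proof.
  intros HP HS Hb1 Hb0.
  apply (exactQ_of _ _ (fun m => a1 ^ N1 hS m * a0 ^ N0 hS m)%nat
                       (fun m => b1 ^ N1 hS m * b0 ^ N0 hS m)%nat).
  - unfold PR1, N1, N0. prd.
  - unfold PR1, N1, N0. prd.
  - intros d. pose proof (Nat.pow_le_mono_l 1 b1 (N1 hS (code_sit d)) Hb1).
    pose proof (Nat.pow_le_mono_l 1 b0 (N0 hS (code_sit d)) Hb0).
    rewrite Nat.pow_1_l in *. nia.
  - intros d. rewrite Dcirc_Dsel, N1_spec with (S := S), N0_spec with (S := S) by auto.
    rewrite !mult_INR, !pow_INR. unfold Rdiv. rewrite !Rpow_mult_distr, !pow_inv.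
    assert (INR b1 <> 0) by (apply not_0_INR; lia).
    assert (INR b0 <> 0) by (apply not_0_INR; lia).
    rewrite Rinv_mult. ring.
Qed.

Lemma Dsel_mult S hS a1 b1 a0 b0 :
  PR1 hS -> (forall s, hS (code_sit s) = b2n (S s)) -> (1 <= b1)%nat -> (1 <= b0)%nat ->
  lsc_multiplier (Dsel S (INR a1 / INR b1) (INR a0 / INR b0)).
Proof.
  intros HP HS Hb1 Hb0. apply exact_lsc.
  apply (exactQ_of _ _ (fun p => cond (hS (unp1 p)) (cond (unp2 p) a1 a0) 1)
                       (fun p => cond (hS (unp1 p)) (cond (unp2 p) b1 b0) 1)).
  - unfold PR1. prd.
  - unfold PR1. prd.
  - intros [s x]. unfold code_sx; simpl fst; simpl snd. rewrite unp1_npair, unp2_npair, HS.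
    unfold cond. destruct (S s), x; simpl; lia.
  - intros [s x]. unfold code_sx; simpl fst; simpl snd. rewrite unp1_npair, unp2_npair, HS.
    unfold Dsel, cond. simpl fst; simpl snd. destruct (S s), x; simpl;
    rewrite ?Nat.add_0_r, ?Nat.sub_0_r; try lra.
Qed.

Lemma mod2_cases x : (mod2 x = 0 /\ Nat.even x = true /\ x = 2 * (x / 2))%nat \/
                     (mod2 x = 1 /\ Nat.even x = false /\ x = 2 * ((x + 1) / 2) - 1)%nat.
Proof.
  unfold mod2. destruct (Nat.even x) eqn:E.
  - left. apply Nat.even_spec in E. destruct E as [y ->].
    rewrite (div2_eq (2*y) y) by lia. lia.
  - right. assert (Nat.odd x = true) by (unfold Nat.odd; rewrite E; auto).
    apply Nat.odd_spec in H. destruct H as [y ->].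
    rewrite (div2_eq (2*y+1) y) by lia. rewrite (div2_eq (2*y+1+1) (y+1)) by lia. lia.
Qed.

Lemma zz_odd x : Nat.even x = false -> (zz x < 0)%Z.
Proof.
  intros E. assert (Nat.odd x = true) by (unfold Nat.odd; rewrite E; auto).
  apply Nat.odd_spec in H. destruct H as [y ->]. unfold zz. rewrite E.
  rewrite (div2_eq (2*y+1+1) (y+1)) by lia. lia.
Qed.

Lemma zz_evenv x : Nat.even x = true -> zz x = Z.of_nat (x / 2).
Proof. intros E. unfold zz. rewrite E. reflexivity. Qed.

Definition selB (q : list bool -> nat -> R) (N : nat) (t : R) (s : list bool) : bool :=
  if Rlt_dec (q s N) t then true else false.
Definition selA (q : list bool -> nat -> R) (N : nat) (t : R) (s : list bool) : bool :=
  if Rlt_dec t (q s N) then true else false.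

Lemma selB_rec (lo : list bool -> R) q hn hd N tn td :
  recursive_nat hn -> recursive_nat hd -> (1 <= td)%nat ->
  (forall d n, q d n = qval (hn (npair (code_sit d) n)) (hd (npair (code_sit d) n))) ->
  exists hS, PR1 hS /\ forall s, hS (code_sit s) = b2n (selB q N (INR tn / INR td) s).
Proof.
  intros Hn Hd Htd Hq. apply rec_PR1 in Hn, Hd.
  exists (fun c => cond (mod2 (hn (npair c N))) 1
              (ltn (hn (npair c N) / 2 * td) (tn * (hd (npair c N) + 1))))%nat.
  split.
  - unfold PR1, mod2. prd.
  - intros s. unfold selB. rewrite Hq. unfold qval.
    set (a := hn (npair (code_sit s) N)). set (b := hd (npair (code_sit s) N)).
    assert (Htd' : 0 < INR td) by (apply lt_0_INR; lia).
    assert (Hb : 0 < INR (S b)) by (apply lt_0_INR; lia).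
    destruct (mod2_cases a) as [[E1 [E2 E3]]|[E1 [E2 E3]]]; rewrite E1; unfold cond.
    + rewrite zz_evenv by auto. rewrite <- INR_IZR_INZ, ltn_spec.
      destruct (Nat.ltb_spec (a / 2 * td) (tn * (b + 1))) as [L|L];
      destruct (Rlt_dec (INR (a / 2) / INR (S b)) (INR tn / INR td)) as [R1|R1]; simpl; auto.
      * exfalso. apply R1. apply lt_INR in L. rewrite !mult_INR in L.
        replace (b + 1)%nat with (S b) in L by lia.
        apply (Rmult_lt_reg_r (INR (S b) * INR td)). nra.
        field_simplify; try lra; match goal with |- ?g => idtac g end.
      * exfalso. apply Nat.le_ngt in L. apply L. apply INR_lt. rewrite !mult_INR.
        replace (b + 1)%nat with (S b) by lia.
        apply (Rmult_lt_compat_r (INR (S b) * INR td)) in R1; [|nra].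
        field_simplify in R1; lra.
    + cbv beta. destruct (Rlt_dec (IZR (zz a) / INR (S b)) (INR tn / INR td)) as [R1|R1]; simpl b2n; [lia|].
      exfalso. apply R1. apply zz_odd in E2. apply IZR_lt in E2.
      assert (IZR (zz a) / INR (S b) < 0).
      { unfold Rdiv. apply Rmult_neg_pos; [lra| apply Rinv_0_lt_compat; lra]. }
      assert (0 <= INR tn / INR td) by (unfold Rdiv; apply Rmult_le_pos; [apply pos_INR| left; apply Rinv_0_lt_compat; lra]).
      lra.
Qed.

Lemma selA_rec (lo : list bool -> R) q hn hd N tn td :
  recursive_nat hn -> recursive_nat hd -> (1 <= td)%nat ->
  (forall d n, q d n = qval (hn (npair (code_sit d) n)) (hd (npair (code_sit d) n))) ->
  exists hS, PR1 hS /\ forall s, hS (code_sit s) = b2n (selA q N (INR tn / INR td) s).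
Proof.
  intros Hn Hd Htd Hq. apply rec_PR1 in Hn, Hd.
  exists (fun c => cond (mod2 (hn (npair c N))) 0
              (ltn (tn * (hd (npair c N) + 1)) (hn (npair c N) / 2 * td)))%nat.
  split.
  - unfold PR1, mod2. prd.
  - intros s. unfold selA. rewrite Hq. unfold qval.
    set (a := hn (npair (code_sit s) N)). set (b := hd (npair (code_sit s) N)).
    assert (Htd' : 0 < INR td) by (apply lt_0_INR; lia).
    assert (Hb : 0 < INR (S b)) by (apply lt_0_INR; lia).
    destruct (mod2_cases a) as [[E1 [E2 E3]]|[E1 [E2 E3]]]; rewrite E1; unfold cond.
    + rewrite zz_evenv by auto. rewrite <- INR_IZR_INZ, ltn_spec.
      destruct (Nat.ltb_spec (tn * (b + 1)) (a / 2 * td)) as [L|L];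
      destruct (Rlt_dec (INR tn / INR td) (INR (a / 2) / INR (S b))) as [R1|R1]; simpl; auto.
      * exfalso. apply R1. apply lt_INR in L. rewrite !mult_INR in L.
        replace (b + 1)%nat with (S b) in L by lia.
        apply (Rmult_lt_reg_r (INR (S b) * INR td)). nra.
        field_simplify; try lra.
      * exfalso. apply Nat.le_ngt in L. apply L. apply INR_lt. rewrite !mult_INR.
        replace (b + 1)%nat with (S b) by lia.
        apply (Rmult_lt_compat_r (INR (S b) * INR td)) in R1; [|nra].
        field_simplify in R1; lra.
    + cbv beta. destruct (Rlt_dec (INR tn / INR td) (IZR (zz a) / INR (S b))) as [R1|R1]; simpl b2n; [|lia].
      exfalso. apply zz_odd in E2. apply IZR_lt in E2.
      assert (IZR (zz a) / INR (S b) < 0).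
      { unfold Rdiv. apply Rmult_neg_pos; [lra| apply Rinv_0_lt_compat; lra]. }
      assert (0 <= INR tn / INR td) by (unfold Rdiv; apply Rmult_le_pos; [apply pos_INR| left; apply Rinv_0_lt_compat; lra]).
      lra.
Qed.

Lemma LimSup_c u : is_LimSup_seq u (LimSup_seq u).
Proof. unfold LimSup_seq. destruct (ex_LimSup_seq u); auto. Qed.
Lemma LimInf_c u : is_LimInf_seq u (LimInf_seq u).
Proof. unfold LimInf_seq. destruct (ex_LimInf_seq u); auto. Qed.

Lemma LimInf_lt_io u c : Rbar_lt (LimInf_seq u) (Finite c) ->
  forall N, exists n, (N <= n)%nat /\ u n < c.
Proof.
  intros H N. pose proof (LimInf_c u) as L. destruct (LimInf_seq u) as [l| |]; simpl in H.
  - assert (e : 0 < c - l) by lra. destruct (L (mkposreal _ e)) as [L1 _].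
    destruct (L1 N) as [n [Hn Hu]]. exists n. simpl in Hu. split; auto. lra.
  - contradiction.
  - apply L.
Qed.

Lemma LimInf_gt_ev u c : Rbar_lt (Finite c) (LimInf_seq u) ->
  exists N, forall n, (N <= n)%nat -> c < u n.
Proof.
  intros H. pose proof (LimInf_c u) as L. destruct (LimInf_seq u) as [l| |]; simpl in H.
  - assert (e : 0 < l - c) by lra. destruct (L (mkposreal _ e)) as [_ [N HN]].
    exists N. intros n Hn. specialize (HN n Hn). simpl in HN. lra.
  - apply L.
  - contradiction.
Qed.

Lemma LimSup_gt_io u c : Rbar_lt (Finite c) (LimSup_seq u) ->
  forall N, exists n, (N <= n)%nat /\ c < u n.
Proof.
  intros H N. pose proof (LimSup_c u) as L. destruct (LimSup_seq u) as [l| |]; simpl in H.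
  - assert (e : 0 < l - c) by lra. destruct (L (mkposreal _ e)) as [L1 _].
    destruct (L1 N) as [n [Hn Hu]]. exists n. simpl in Hu. split; auto. lra.
  - apply L.
  - contradiction.
Qed.

Lemma LimSup_lt_ev u c : Rbar_lt (LimSup_seq u) (Finite c) ->
  exists N, forall n, (N <= n)%nat -> u n < c.
Proof.
  intros H. pose proof (LimSup_c u) as L. destruct (LimSup_seq u) as [l| |]; simpl in H.
  - assert (e : 0 < c - l) by lra. destruct (L (mkposreal _ e)) as [_ [N HN]].
    exists N. intros n Hn. specialize (HN n Hn). simpl in HN. lra.
  - contradiction.
  - apply L.
Qed.

Lemma LimSup_bounded u : LimSup_seq u <> p_infty ->
  exists M N, forall n, (N <= n)%nat -> u n < M.
Proof.
  intros H. pose proof (LimSup_c u) as L. destruct (LimSup_seq u) as [l| |].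
  - destruct (L (mkposreal 1 Rlt_0_1)) as [_ [N HN]]. exists (l + 1), N. apply HN.
  - congruence.
  - destruct (L 0) as [N HN]. exists 0, N. auto.
Qed.

Lemma unbounded_intro u : (forall M N, exists n, (N <= n)%nat /\ M < u n) -> LimSup_seq u = p_infty.
Proof. intros H. apply is_LimSup_seq_unique. simpl. auto. Qed.

Definition isQ (r : R) : Prop := exists a b : nat, (1 <= b)%nat /\ r = INR a / INR b.

Lemma INR_pos b : (1 <= b)%nat -> 0 < INR b.
Proof. intros; apply lt_0_INR; lia. Qed.

Lemma isQ_nonneg r : isQ r -> 0 <= r.
Proof.
  intros [a [b [Hb ->]]]. unfold Rdiv. apply Rmult_le_pos; [apply pos_INR|].
  left; apply Rinv_0_lt_compat, INR_pos; auto.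
Qed.

Lemma isQ_plus x y : isQ x -> isQ y -> isQ (x + y).
Proof.
  intros [a [b [Hb ->]]] [c [d [Hd ->]]]. exists (a * d + c * b)%nat, (b * d)%nat.
  split; [nia|]. pose proof (INR_pos _ Hb); pose proof (INR_pos _ Hd).
  rewrite plus_INR, !mult_INR. field; lra.
Qed.

Lemma isQ_mult x y : isQ x -> isQ y -> isQ (x * y).
Proof.
  intros [a [b [Hb ->]]] [c [d [Hd ->]]]. exists (a * c)%nat, (b * d)%nat.
  split; [nia|]. pose proof (INR_pos _ Hb); pose proof (INR_pos _ Hd).
  rewrite !mult_INR. field; lra.
Qed.

Lemma isQ_div x y : isQ x -> isQ y -> 0 < y -> isQ (x / y).
Proof.
  intros [a [b [Hb ->]]] [c [d [Hd ->]]] Hy. pose proof (INR_pos _ Hb); pose proof (INR_pos _ Hd).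
  assert (c <> 0)%nat. { intro; subst. simpl in Hy. unfold Rdiv in Hy. lra. }
  exists (a * d)%nat, (b * c)%nat. split; [nia|].
  assert (0 < INR c) by (apply lt_0_INR; lia).
  rewrite !mult_INR. field; repeat split; lra.
Qed.

Lemma isQ_half x : isQ x -> isQ (x / 2).
Proof.
  intros [a [b [Hb ->]]]. exists a, (2 * b)%nat. split; [lia|]. pose proof (INR_pos _ Hb).
  rewrite mult_INR. simpl. field. lra.
Qed.

Lemma isQ_1m x : isQ x -> x <= 1 -> isQ (1 - x).
Proof.
  intros [a [b [Hb ->]]] Hx. pose proof (INR_pos _ Hb).
  assert (a <= b)%nat.
  { apply INR_le. apply (Rmult_le_compat_r (INR b)) in Hx; [|lra].
    field_simplify in Hx; lra. }
  exists (b - a)%nat, b. split; auto. rewrite minus_INR by auto. field. lra.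
Qed.

Lemma rat_between x y : 0 <= x < y -> exists r, isQ r /\ x < r < y.
Proof.
  intros [Hx Hxy].
  destruct (archimed (/ (y - x))) as [Hu _].
  set (z := up (/ (y - x))) in *.
  assert (Hz : (0 < z)%Z).
  { apply lt_IZR. assert (0 < / (y - x)) by (apply Rinv_0_lt_compat; lra). simpl; lra. }
  set (td := Z.to_nat z).
  assert (Htd : INR td = IZR z) by (unfold td; rewrite INR_IZR_INZ, Z2Nat.id; auto; lia).
  destruct (archimed (x * INR td)) as [H1 H2].
  set (w := up (x * INR td)) in *.
  assert (Hw : (0 <= w)%Z).
  { apply le_IZR. assert (0 <= x * INR td) by (apply Rmult_le_pos; auto; apply pos_INR). simpl; lra. }
  exists (INR (Z.to_nat w) / INR td). split.
  - exists (Z.to_nat w), td. split; auto. unfold td. lia.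
  - assert (Ht : 0 < INR td) by (rewrite Htd; apply IZR_lt; auto).
    rewrite INR_IZR_INZ, Z2Nat.id by auto. split.
    + apply (Rmult_lt_reg_r (INR td)); auto. field_simplify; lra.
    + apply (Rmult_lt_reg_r (INR td)); auto. field_simplify; [|lra].
      assert (/ (y - x) < INR td) by lra.
      assert (1 < (y - x) * INR td).
      { apply (Rmult_lt_compat_l (y - x)) in H; [|lra]. rewrite Rinv_r in H; lra. }
      nra.
Qed.

Lemma prefix_S om n : prefix om (S n) = prefix om n ++ [om n].
Proof. unfold prefix. rewrite seq_S, map_app. reflexivity. Qed.

Lemma Dsel_nonneg S al be s : 0 <= al -> 0 <= be -> 0 <= Dcirc (Dsel S al be) s.
Proof.
  intros Ha Hb. induction s as [|x s IH] using rev_ind.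
  - rewrite Dcirc_nil; lra.
  - rewrite Dcirc_app. apply Rmult_le_pos; auto. unfold Dsel.
    destruct (S s), x; lra.
Qed.

Lemma Dsel_test L H S al be : 0 <= al -> 0 <= be ->
  (forall s, S s = true -> forall p, L s <= p <= H s -> p * al + (1 - p) * be <= 1) ->
  test_supermartingale L H (Dcirc (Dsel S al be)).
Proof.
  intros Ha Hb Hc. split; [|split].
  - intros s p Hp. rewrite !Dcirc_app.
    pose proof (Dsel_nonneg S al be s Ha Hb).
    set (T := Dcirc (Dsel S al be) s) in *.
    unfold Dsel. destruct (S s) eqn:E.
    + specialize (Hc s E p Hp).
      replace (p * (T * al - T) + (1 - p) * (T * be - T))
      with (T * (p * al + (1 - p) * be - 1)) by ring.
      assert (p * al + (1 - p) * be - 1 <= 0) by lra. nra.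
    + lra.
  - intros; apply Dsel_nonneg; auto.
  - reflexivity.
Qed.

Fixpoint cntS (S : list bool -> bool) (om : nat -> bool) (n : nat) : nat :=
  match n with 0 => 0%nat | Datatypes.S n' => (cntS S om n' + (if S (prefix om n') then 1 else 0))%nat end.

Lemma cntS_mono S om n m : (n <= m)%nat -> (cntS S om n <= cntS S om m)%nat.
Proof. induction 1; simpl; auto. lia. Qed.

Lemma cntS_unb S om : (forall N, exists n, (N <= n)%nat /\ S (prefix om n) = true) ->
  forall K, exists n, (K <= cntS S om n)%nat.
Proof.
  intros H K. induction K.
  - exists 0%nat. lia.
  - destruct IHK as [n Hn]. destruct (H n) as [n' [Hn' Hs]].
    exists (Datatypes.S n'). simpl. rewrite Hs. pose proof (cntS_mono S om n n' Hn'). lia.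
Qed.

Lemma Dsel_growth S al1 be1 al2 be2 kap om n :
  0 <= al1 -> 0 <= be1 -> 0 <= al2 -> 0 <= be2 -> 1 <= kap ->
  kap <= al1 * al2 -> kap <= be1 * be2 ->
  kap ^ (cntS S om n) <= Dcirc (Dsel S al1 be1) (prefix om n) * Dcirc (Dsel S al2 be2) (prefix om n).
Proof.
  intros. induction n.
  - simpl. rewrite !Dcirc_nil. lra.
  - rewrite prefix_S, !Dcirc_app. simpl cntS. rewrite pow_add.
    unfold Dsel at 2 4. destruct (S (prefix om n)); simpl.
    + replace (Dcirc (Dsel S al1 be1) (prefix om n) * (if om n then al1 else be1) *
        (Dcirc (Dsel S al2 be2) (prefix om n) * (if om n then al2 else be2))) with
        ((Dcirc (Dsel S al1 be1) (prefix om n) * Dcirc (Dsel S al2 be2) (prefix om n)) *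
         ((if om n then al1 else be1) * (if om n then al2 else be2))) by ring.
      apply Rmult_le_compat; try lra.
      * apply pow_le; lra.
      * destruct (om n); lra.
    + lra.
Qed.

Lemma pow_unb kap : 1 < kap -> forall M, exists K, M < kap ^ K.
Proof.
  intros Hk M.
  assert (B : forall K, 1 + INR K * (kap - 1) <= kap ^ K).
  { induction K; [simpl; lra|]. rewrite S_INR. simpl pow.
    assert (0 <= INR K) by apply pos_INR.
    assert (kap * (1 + INR K * (kap - 1)) <= kap * kap ^ K) by (apply Rmult_le_compat_l; lra).
    assert (0 <= INR K * ((kap - 1) * (kap - 1))) by (apply Rmult_le_pos; nra).
    nra. }
  assert (Hd : 0 < / (kap - 1)) by (apply Rinv_0_lt_compat; lra).
  destruct (archimed (Rabs M / (kap - 1))) as [H _].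
  assert (Hp : (0 <= up (Rabs M / (kap - 1)))%Z).
  { apply le_IZR. assert (0 <= Rabs M / (kap - 1)) by (unfold Rdiv; apply Rmult_le_pos; [apply Rabs_pos|lra]). simpl; lra. }
  exists (Z.to_nat (up (Rabs M / (kap - 1)))).
  specialize (B (Z.to_nat (up (Rabs M / (kap - 1))))).
  rewrite INR_IZR_INZ, Z2Nat.id in B by auto.
  assert (Rabs M < IZR (up (Rabs M / (kap - 1))) * (kap - 1)).
  { apply (Rmult_lt_compat_r (kap - 1)) in H; [|lra]. unfold Rdiv in H.
    rewrite Rmult_assoc, Rinv_l, Rmult_1_r in H; lra. }
  pose proof (Rle_abs M). lra.
Qed.

Lemma prod_unb (u v : nat -> R) : (forall n, 0 <= u n) -> (forall n, 0 <= v n) ->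
  (forall M N, exists n, (N <= n)%nat /\ M < u n * v n) ->
  LimSup_seq u = p_infty \/ LimSup_seq v = p_infty.
Proof.
  intros Hu Hv H. apply NNPP. intros C. apply not_or_and in C. destruct C as [C1 C2].
  destruct (LimSup_bounded u C1) as [M1 [N1 H1]].
  destruct (LimSup_bounded v C2) as [M2 [N2 H2]].
  destruct (H (Rabs M1 * Rabs M2) (N1 + N2)%nat) as [n [Hn Hlt]].
  specialize (H1 n ltac:(lia)). specialize (H2 n ltac:(lia)). specialize (Hu n). specialize (Hv n).
  assert (u n * v n <= Rabs M1 * Rabs M2).
  { apply Rmult_le_compat; auto; apply Rle_trans with (2 := Rle_abs _); lra. }
  lra.
Qed.

Lemma bet_low u v p : 0 < u < v -> v < 1 -> 0 <= p <= u ->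
  p * (((u + v) / 2) / u) + (1 - p) * ((1 - (u + v) / 2) / (1 - u)) <= 1.
Proof.
  intros Hu Hv Hp. set (m := (u + v) / 2).
  set (A := m / u). set (B := (1 - m) / (1 - u)).
  assert (E : u * A + (1 - u) * B = 1) by (unfold A, B; field; lra).
  assert (AB : B <= A).
  { unfold A, B. apply (Rmult_le_reg_r (u * (1 - u))); [nra|].
    field_simplify; [|lra|lra]. unfold m. nra. }
  nra.
Qed.

Lemma bet_high u v p : 0 < u < v -> v < 1 -> v <= p <= 1 ->
  p * (((u + v) / 2) / v) + (1 - p) * ((1 - (u + v) / 2) / (1 - v)) <= 1.
Proof.
  intros Hu Hv Hp. set (m := (u + v) / 2).
  set (A := m / v). set (B := (1 - m) / (1 - v)).
  assert (E : v * A + (1 - v) * B = 1) by (unfold A, B; field; lra).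
  assert (AB : A <= B).
  { unfold A, B. apply (Rmult_le_reg_r (v * (1 - v))); [nra|].
    field_simplify; [|lra|lra]. unfold m. nra. }
  nra.
Qed.

Lemma bet_growth u v : 0 < u < v -> v < 1 ->
  exists kap, 1 < kap /\
    kap <= (((u + v) / 2) / u) * (((u + v) / 2) / v) /\
    kap <= ((1 - (u + v) / 2) / (1 - u)) * ((1 - (u + v) / 2) / (1 - v)).
Proof.
  intros Hu Hv.
  exists (Rmin ((((u + v) / 2) / u) * (((u + v) / 2) / v))
           (((1 - (u + v) / 2) / (1 - u)) * ((1 - (u + v) / 2) / (1 - v)))).
  split; [|split; [apply Rmin_l | apply Rmin_r]].
  apply Rmin_glb_lt.
  - replace ((u + v) / 2 / u * ((u + v) / 2 / v)) with (((u + v) * (u + v)) / (4 * (u * v))) by (field; lra).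
    apply (Rmult_lt_reg_r (4 * (u * v))); [nra|]. unfold Rdiv. rewrite Rmult_assoc, Rinv_l by nra. nra.
  - replace ((1 - (u + v) / 2) / (1 - u) * ((1 - (u + v) / 2) / (1 - v)))
      with (((2 - u - v) * (2 - u - v)) / (4 * ((1 - u) * (1 - v)))) by (field; lra).
    apply (Rmult_lt_reg_r (4 * ((1 - u) * (1 - v)))); [nra|]. unfold Rdiv.
    rewrite Rmult_assoc, Rinv_l by nra. nra.
Qed.

Lemma small_pow eps : 0 < eps -> exists N, / 2 ^ N < eps.
Proof.
  intros He. destruct (pow_unb 2 ltac:(lra) (/ eps)) as [K HK]. exists K.
  assert (0 < 2 ^ K) by (apply pow_lt; lra).
  apply (Rmult_lt_reg_r (2 ^ K)); auto. rewrite Rinv_l by lra.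
  apply (Rmult_lt_compat_l eps) in HK; auto. rewrite Rinv_r in HK; lra.
Qed.

Definition notCH (Rn : notion) : Prop := Rn <> CH.

Lemma Dsel_not_unb Rn L H om S hS al be :
  Rn <> CH -> PR1 hS -> (forall s, hS (code_sit s) = b2n (S s)) -> isQ al -> isQ be ->
  (forall s, S s = true -> forall p, L s <= p <= H s -> p * al + (1 - p) * be <= 1) ->
  random Rn L H om -> LimSup_seq (fun n => Dcirc (Dsel S al be) (prefix om n)) <> p_infty.
Proof.
  intros HRn HP HS Qa Qb Hc Hr Hu.
  pose proof (isQ_nonneg _ Qa) as Ha. pose proof (isQ_nonneg _ Qb) as Hb.
  pose proof (Dsel_test L H S al be Ha Hb Hc) as Ht.
  destruct Qa as [a1 [b1 [Hb1 ->]]]. destruct Qb as [a0 [b0 [Hb0 ->]]].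
  destruct Rn; simpl in Hr.
  - apply Hr. exists (Dcirc (Dsel S (INR a1 / INR b1) (INR a0 / INR b0))).
    split; [apply exact_lsc, (Dsel_exact S hS); auto|]. split; auto.
  - apply Hr. exists (Dsel S (INR a1 / INR b1) (INR a0 / INR b0)).
    split; [apply (Dsel_mult S hS); auto|]. split; auto.
  - apply Hr. exists (Dcirc (Dsel S (INR a1 / INR b1) (INR a0 / INR b0))).
    split; [apply exact_comp, (Dsel_exact S hS); auto|]. split; auto.
  - congruence.
Qed.

Lemma LimInf_ge0 (u : nat -> R) : (forall n, 0 <= u n) -> Rbar_le (Finite 0) (LimInf_seq u).
Proof.
  intros H. rewrite <- (LimInf_seq_const 0). apply LimInf_le. exists 0%nat. intros; auto.
Qed.
Lemma LimSup_le1 (u : nat -> R) : (forall n, u n <= 1) -> Rbar_le (LimSup_seq u) (Finite 1).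
Proof.
  intros H. rewrite <- (LimSup_seq_const 1). apply LimSup_le. exists 0%nat. intros; auto.
Qed.

(* two selection-based tests with growing product *)
Lemma two_tests_contra Rn L1 H1 L2 H2 om S hS u v :
  Rn <> CH -> PR1 hS -> (forall s, hS (code_sit s) = b2n (S s)) ->
  isQ u -> isQ v -> 0 < u < v -> v < 1 ->
  (forall N, exists n, (N <= n)%nat /\ S (prefix om n) = true) ->
  (forall s, S s = true -> forall p, L1 s <= p <= H1 s -> 0 <= p <= u) ->
  (forall s, S s = true -> forall p, L2 s <= p <= H2 s -> v <= p <= 1) ->
  random Rn L1 H1 om -> random Rn L2 H2 om -> False.
Proof.
  intros HRn HP HS Qu Qv Huv Hv1 Hio H1s H2s R1 R2.
  set (m := (u + v) / 2).
  assert (Qm : isQ m) by (apply isQ_half, isQ_plus; auto).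
  assert (Q1 : isQ (m / u)) by (apply isQ_div; auto; lra).
  assert (Q2 : isQ ((1 - m) / (1 - u))) by (apply isQ_div; [apply isQ_1m; auto; unfold m; lra| apply isQ_1m; auto; lra | lra]).
  assert (Q3 : isQ (m / v)) by (apply isQ_div; auto; lra).
  assert (Q4 : isQ ((1 - m) / (1 - v))) by (apply isQ_div; [apply isQ_1m; auto; unfold m; lra| apply isQ_1m; auto; lra | lra]).
  pose proof (Dsel_not_unb Rn L1 H1 om S hS _ _ HRn HP HS Q1 Q2) as N1.
  pose proof (Dsel_not_unb Rn L2 H2 om S hS _ _ HRn HP HS Q3 Q4) as N2.
  destruct (bet_growth u v Huv Hv1) as [kap [Hk [Hk1 Hk2]]].
  assert (U : LimSup_seq (fun n => Dcirc (Dsel S (m / u) ((1 - m) / (1 - u))) (prefix om n)) = p_infty \/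
              LimSup_seq (fun n => Dcirc (Dsel S (m / v) ((1 - m) / (1 - v))) (prefix om n)) = p_infty).
  { apply prod_unb.
    - intros; apply Dsel_nonneg; apply isQ_nonneg; auto.
    - intros; apply Dsel_nonneg; apply isQ_nonneg; auto.
    - intros M N. destruct (pow_unb kap Hk M) as [K HK].
      destruct (cntS_unb S om Hio K) as [n Hn].
      exists (N + n)%nat. split; [lia|].
      eapply Rlt_le_trans; [exact HK|].
      eapply Rle_trans; [apply (Rle_pow kap K (cntS S om (N + n))); [lra|]|].
      + pose proof (cntS_mono S om n (N + n) ltac:(lia)); lia.
      + apply Dsel_growth; try (apply isQ_nonneg; auto); try lra; auto. }
  destruct U as [U|U].
  - apply (N1 (fun s Hs p Hp => bet_low u v p Huv Hv1 (H1s s Hs p Hp)) R1). exact U.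
  - apply (N2 (fun s Hs p Hp => bet_high u v p Huv Hv1 (H2s s Hs p Hp)) R2). exact U.
Qed.

Lemma A_low Rn lo hi om a b :
  Rn <> CH -> is_FS lo hi -> precise lo hi -> computable_FS lo hi ->
  random Rn lo hi om -> 0 <= a -> a <= b -> b <= 1 ->
  random Rn (fun _ => a) (fun _ => b) om ->
  Rbar_le (Finite a) (LimInf_seq (fun n => lo (prefix om n))).
Proof.
  intros HRn Hfs Hpr [Hcl _] Rphi Ha Hab Hb1 Rab.
  apply Rbar_not_lt_le. intro Hlt.
  pose proof (LimInf_ge0 (fun n => lo (prefix om n)) (fun n => proj1 (Hfs _))) as Hge.
  pose proof (LimInf_lt_io (fun n => lo (prefix om n))) as Hio.
  destruct (LimInf_seq (fun n => lo (prefix om n))) as [l| |]; simpl in Hlt, Hge; try contradiction.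
  destruct (rat_between l a ltac:(lra)) as [t [Qt Ht]].
  set (c' := (l + t) / 2).
  assert (Ht0 : 0 <= t) by lra.
  destruct (rat_between t a ltac:(lra)) as [c [Qc Hc]].
  destruct (rat_between c a ltac:(lra)) as [a' [Qa' Ha']].
  destruct (small_pow (Rmin (t - c') (c - t))) as [N HN].
  { apply Rmin_glb_lt; unfold c'; lra. }
  pose proof (Rmin_l (t - c') (c - t)). pose proof (Rmin_r (t - c') (c - t)).
  destruct Hcl as [q [[hn [hd [Hn [Hd Hq]]]] Hbnd]].
  destruct Qt as [tn [td [Htd Ht']]].
  destruct (selB_rec lo q hn hd N tn td Hn Hd Htd Hq) as [hS [HP HS]].
  rewrite <- Ht' in HS.
  apply (two_tests_contra Rn lo hi (fun _ => a) (fun _ => b) om (selB q N t) hS c a' HRn HP HS Qc Qa').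
  - lra.
  - lra.
  - intros N0. destruct (Hio c' ltac:(simpl; unfold c'; lra) N0) as [n [Hn0 Hlo]].
    exists n. split; auto. unfold selB. destruct (Rlt_dec (q (prefix om n) N) t); auto.
    exfalso. apply n0. specialize (Hbnd (prefix om n) N).
    apply Rabs_def2 in Hbnd. lra.
  - intros s Hs p Hp. rewrite <- (Hpr s) in Hp. assert (p = lo s) by lra. subst p.
    unfold selB in Hs. destruct (Rlt_dec (q s N) t) as [Hl|]; [|discriminate].
    specialize (Hbnd s N). apply Rabs_def2 in Hbnd. pose proof (Hfs s). lra.
  - intros s Hs p Hp. lra.
  - exact Rphi.
  - exact Rab.
Qed.

Lemma A_high Rn lo hi om a b :
  Rn <> CH -> is_FS lo hi -> precise lo hi -> computable_FS lo hi ->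
  random Rn lo hi om -> 0 <= a -> a <= b -> b <= 1 ->
  random Rn (fun _ => a) (fun _ => b) om ->
  Rbar_le (LimSup_seq (fun n => hi (prefix om n))) (Finite b).
Proof.
  intros HRn Hfs Hpr [Hcl _] Rphi Ha Hab Hb1 Rab.
  apply Rbar_not_lt_le. intro Hlt.
  pose proof (LimSup_le1 (fun n => hi (prefix om n)) (fun n => proj2 (proj2 (Hfs _)))) as Hge.
  pose proof (LimSup_gt_io (fun n => hi (prefix om n))) as Hio.
  destruct (LimSup_seq (fun n => hi (prefix om n))) as [l| |]; simpl in Hlt, Hge; try contradiction.
  destruct (rat_between b l ltac:(lra)) as [t [Qt Ht]].
  set (c' := (t + l) / 2).
  destruct (rat_between b t ltac:(lra)) as [c [Qc Hc]].
  destruct (rat_between b c ltac:(lra)) as [b' [Qb' Hb']].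
  destruct (small_pow (Rmin (c' - t) (t - c))) as [N HN].
  { apply Rmin_glb_lt; unfold c'; lra. }
  pose proof (Rmin_l (c' - t) (t - c)). pose proof (Rmin_r (c' - t) (t - c)).
  destruct Hcl as [q [[hn [hd [Hn [Hd Hq]]]] Hbnd]].
  destruct Qt as [tn [td [Htd Ht']]].
  destruct (selA_rec lo q hn hd N tn td Hn Hd Htd Hq) as [hS [HP HS]].
  rewrite <- Ht' in HS.
  apply (two_tests_contra Rn (fun _ => a) (fun _ => b) lo hi om (selA q N t) hS b' c HRn HP HS Qb' Qc).
  - lra.
  - lra.
  - intros N0. destruct (Hio c' ltac:(simpl; unfold c'; lra) N0) as [n [Hn0 Hlo]].
    exists n. split; auto. unfold selA. destruct (Rlt_dec t (q (prefix om n) N)); auto.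
    exfalso. apply n0. specialize (Hbnd (prefix om n) N). rewrite <- (Hpr _) in Hlo.
    apply Rabs_def2 in Hbnd. lra.
  - intros s Hs p Hp. lra.
  - intros s Hs p Hp. rewrite <- (Hpr s) in Hp. assert (p = lo s) by lra. subst p.
    unfold selA in Hs. destruct (Rlt_dec t (q s N)) as [Hl|]; [|discriminate].
    specialize (Hbnd s N). apply Rabs_def2 in Hbnd. pose proof (Hfs s). lra.
  - exact Rab.
  - exact Rphi.
Qed.

Lemma fsum_S (f : nat -> R) n :
  fold_right Rplus 0 (map f (seq 0 (S n))) = fold_right Rplus 0 (map f (seq 0 n)) + f n.
Proof.
  rewrite seq_S, map_app, fold_right_app. simpl.
  assert (G : forall a l, fold_right Rplus a l = fold_right Rplus 0 l + a).
  { induction l; simpl; intros; [lra|]. rewrite IHl. lra. }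
  rewrite G. lra.
Qed.

Lemma sel_count_S S om n : sel_count S om (Datatypes.S n) = sel_count S om n + sel S (prefix om n).
Proof. unfold sel_count. apply fsum_S. Qed.
Lemma sel_sum_S S f om n : sel_sum S f om (Datatypes.S n) =
  sel_sum S f om n + sel S (prefix om n) * ((if om n then 1 else 0) - f (prefix om n)).
Proof. unfold sel_sum. apply (fsum_S (fun k => sel S (prefix om k) * ((if om k then 1 else 0) - f (prefix om k)))). Qed.
Lemma sel_count_0 S om : sel_count S om 0 = 0. Proof. reflexivity. Qed.
Lemma sel_sum_0 S f om : sel_sum S f om 0 = 0. Proof. reflexivity. Qed.

Lemma sel_count_cnt S om n : sel_count S om n = INR (cntS S om n).
Proof.
  induction n. reflexivity. rewrite sel_count_S, IHn. simpl cntS. rewrite plus_INR.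
  unfold sel. destruct (S (prefix om n)); simpl; lra.
Qed.

Lemma sel_count_ge0 S om n : 0 <= sel_count S om n.
Proof. rewrite sel_count_cnt. apply pos_INR. Qed.

Lemma count_inf S om : (forall N, exists n, (N <= n)%nat /\ S (prefix om n) = true) ->
  is_lim_seq (sel_count S om) p_infty.
Proof.
  intros H. apply is_lim_seq_spec. intros M.
  destruct (archimed (Rabs M)) as [HM _].
  destruct (cntS_unb S om H (Z.to_nat (up (Rabs M)))) as [n0 Hn0].
  exists n0. intros n Hn. rewrite sel_count_cnt.
  pose proof (cntS_mono S om n0 n Hn).
  assert (Z.to_nat (up (Rabs M)) <= cntS S om n)%nat by lia.
  apply le_INR in H1. rewrite INR_IZR_INZ in H1.
  destruct (Z_lt_le_dec (up (Rabs M)) 0).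
  - apply IZR_lt in l. pose proof (Rabs_pos M). lra.
  - rewrite Z2Nat.id in H1 by auto. pose proof (Rle_abs M). lra.
Qed.

Lemma count_ev_pos S om : is_lim_seq (sel_count S om) p_infty ->
  exists N, forall n, (N <= n)%nat -> 0 < sel_count S om n.
Proof. intros H. apply is_lim_seq_spec in H. apply (H 0). Qed.

Lemma count_ev_big S om K : is_lim_seq (sel_count S om) p_infty -> 0 < K ->
  forall d, 0 < d -> exists N, forall n, (N <= n)%nat -> 0 < sel_count S om n /\ K / sel_count S om n < d.
Proof.
  intros H HK d Hd. apply is_lim_seq_spec in H. destruct (H (K / d)) as [N HN].
  exists N. intros n Hn. specialize (HN n Hn).
  assert (0 < K / d) by (unfold Rdiv; apply Rmult_lt_0_compat; auto; apply Rinv_0_lt_compat; auto).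
  split; [lra|].
  apply (Rmult_lt_reg_r (sel_count S om n)); [lra|]. unfold Rdiv.
  rewrite Rmult_assoc, Rinv_l by lra.
  apply (Rmult_lt_compat_l d) in HN; auto. unfold Rdiv in HN.
  rewrite <- Rmult_assoc, (Rmult_comm d K), Rmult_assoc, Rinv_r, Rmult_1_r in HN; lra.
Qed.

Lemma liminf_ge0_of (u : nat -> R) : (forall d, 0 < d -> exists N, forall n, (N <= n)%nat -> - d < u n) ->
  Rbar_le (Finite 0) (LimInf_seq u).
Proof.
  intros H. apply Rbar_not_lt_le. intros Hlt.
  assert (exists d, 0 < d /\ Rbar_lt (LimInf_seq u) (Finite (- d))) as [d [Hd Hl]].
  { destruct (LimInf_seq u) as [l| |]; simpl in Hlt; try contradiction.
    - exists (- l / 2). simpl. split; lra.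
    - exists 1. simpl. split; auto; lra. }
  destruct (H d Hd) as [N HN]. destruct (LimInf_lt_io u (- d) Hl N) as [n [Hn Hu]].
  specialize (HN n Hn). lra.
Qed.

Lemma limsup_le0_of (u : nat -> R) : (forall d, 0 < d -> exists N, forall n, (N <= n)%nat -> u n < d) ->
  Rbar_le (LimSup_seq u) (Finite 0).
Proof.
  intros H. apply Rbar_not_lt_le. intros Hlt.
  assert (exists d, 0 < d /\ Rbar_lt (Finite d) (LimSup_seq u)) as [d [Hd Hl]].
  { destruct (LimSup_seq u) as [l| |]; simpl in Hlt; try contradiction.
    - exists (l / 2). simpl. split; lra.
    - exists 1. simpl. split; auto; lra. }
  destruct (H d Hd) as [N HN]. destruct (LimSup_gt_io u d Hl N) as [n [Hn Hu]].
  specialize (HN n Hn). lra.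
Qed.

Lemma ratio_le X Y d C : 0 < C -> X <= Y - d * C -> X / C <= Y / C - d.
Proof.
  intros HC H. apply (Rmult_le_reg_r C); auto. unfold Rdiv.
  rewrite Rmult_minus_distr_r, !Rmult_assoc, Rinv_l by lra. lra.
Qed.

Lemma ratio_ge X Y K C : 0 < C -> Y - K <= X -> Y / C - K / C <= X / C.
Proof.
  intros HC H. apply (Rmult_le_reg_r C); auto. unfold Rdiv.
  rewrite Rmult_minus_distr_r, !Rmult_assoc, !Rinv_l by lra. lra.
Qed.

Lemma sel_rec_of hS S : PR1 hS -> (forall s, hS (code_sit s) = b2n (S s)) -> recursive_selection S.
Proof. intros HP HS. exists hS. split; auto. apply PR1_rec; auto. Qed.

Lemma sel_sum_cmp S f g d om n :
  (forall k, (k < n)%nat -> S (prefix om k) = true -> f (prefix om k) + d <= g (prefix om k)) ->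
  sel_sum S g om n <= sel_sum S f om n - d * sel_count S om n.
Proof.
  induction n; intros H.
  - rewrite !sel_sum_0, sel_count_0. lra.
  - rewrite !sel_sum_S, sel_count_S. specialize (IHn (fun k Hk => H k ltac:(lia))).
    unfold sel. destruct (S (prefix om n)) eqn:E.
    + specialize (H n ltac:(lia) E). lra.
    + lra.
Qed.

Lemma sel_sum_cmp_ev S f g om K0 n :
  (forall k, (K0 <= k)%nat -> S (prefix om k) = true -> g (prefix om k) <= f (prefix om k)) ->
  (forall s, g s - f s <= 1) ->
  sel_sum S f om n - INR K0 <= sel_sum S g om n.
Proof.
  intros H H1.
  assert (G : sel_sum S f om n - INR (Nat.min n K0) <= sel_sum S g om n).
  { induction n.
    - rewrite !sel_sum_0. simpl. lra.
    - rewrite !sel_sum_S. unfold sel.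
      destruct (le_lt_dec K0 n).
      + replace (Nat.min (Datatypes.S n) K0) with (Nat.min n K0) by lia.
        destruct (S (prefix om n)) eqn:E; [specialize (H n l E)|]; lra.
      + replace (Nat.min (Datatypes.S n) K0) with (Datatypes.S (Nat.min n K0)) by lia.
        rewrite S_INR. specialize (H1 (prefix om n)).
        destruct (S (prefix om n)); lra. }
  assert (INR (Nat.min n K0) <= INR K0) by (apply le_INR; lia). lra.
Qed.

Lemma CH_A_low lo hi om a b :
  is_FS lo hi -> precise lo hi -> computable_FS lo hi ->
  random CH lo hi om -> 0 <= a -> a <= b -> b <= 1 ->
  random CH (fun _ => a) (fun _ => b) om ->
  Rbar_le (Finite a) (LimInf_seq (fun n => lo (prefix om n))).
Proof.
  intros Hfs Hpr [Hcl _] Rphi Ha Hab Hb1 Rab.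
  apply Rbar_not_lt_le. intro Hlt.
  pose proof (LimInf_ge0 (fun n => lo (prefix om n)) (fun n => proj1 (Hfs _))) as Hge.
  pose proof (LimInf_lt_io (fun n => lo (prefix om n))) as Hio.
  destruct (LimInf_seq (fun n => lo (prefix om n))) as [l| |]; simpl in Hlt, Hge; try contradiction.
  destruct (rat_between l a ltac:(lra)) as [t [Qt Ht]].
  set (c' := (l + t) / 2).
  set (c := (t + a) / 2).
  destruct (small_pow (Rmin (t - c') (c - t))) as [N HN].
  { apply Rmin_glb_lt; unfold c', c; lra. }
  pose proof (Rmin_l (t - c') (c - t)). pose proof (Rmin_r (t - c') (c - t)).
  destruct Hcl as [q [[hn [hd [Hn [Hd Hq]]]] Hbnd]].
  destruct Qt as [tn [td [Htd Ht']]].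
  destruct (selB_rec lo q hn hd N tn td Hn Hd Htd Hq) as [hS [HP HS]].
  rewrite <- Ht' in HS.
  set (S := selB q N t) in *.
  assert (Hinf : forall N0, exists n, (N0 <= n)%nat /\ S (prefix om n) = true).
  { intros N0. destruct (Hio c' ltac:(simpl; unfold c'; lra) N0) as [n [Hn0 Hlo]].
    exists n. split; auto. unfold S, selB. destruct (Rlt_dec (q (prefix om n) N) t); auto.
    exfalso. apply n0. specialize (Hbnd (prefix om n) N).
    apply Rabs_def2 in Hbnd. lra. }
  assert (Hsel : forall s, S s = true -> hi s < c).
  { intros s Hs. rewrite <- Hpr.
    unfold S, selB in Hs. destruct (Rlt_dec (q s N) t) as [Hl|]; [|discriminate].
    specialize (Hbnd s N). apply Rabs_def2 in Hbnd. lra. }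
  pose proof (count_inf S om Hinf) as Hc.
  destruct (Rphi S (sel_rec_of hS S HP HS) Hc) as [_ R1].
  destruct (Rab S (sel_rec_of hS S HP HS) Hc) as [R2 _].
  assert (Hac : 0 < a - c) by (unfold c; lra).
  destruct (LimSup_lt_ev _ ((a - c) / 2) (Rbar_le_lt_trans _ (Finite 0) (Finite ((a - c) / 2)) R1 ltac:(simpl; lra))) as [N1 HN1].
  destruct (count_ev_pos S om Hc) as [N2 HN2].
  destruct (LimInf_gt_ev _ (- ((a - c) / 2)) (Rbar_lt_le_trans (Finite (- ((a - c) / 2))) (Finite 0) _ ltac:(simpl; lra) R2)) as [N3 HN3].
  specialize (HN1 (N1 + N2 + N3)%nat ltac:(lia)). specialize (HN2 (N1 + N2 + N3)%nat ltac:(lia)).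
  specialize (HN3 (N1 + N2 + N3)%nat ltac:(lia)). simpl in HN1, HN3.
  assert (Hcmp := sel_sum_cmp S hi (fun _ => a) (a - c) om (N1 + N2 + N3)
     (fun k _ Hk => ltac:(pose proof (Hsel _ Hk); lra))).
  pose proof (ratio_le _ _ _ _ HN2 Hcmp). lra.
Qed.

Lemma CH_A_high lo hi om a b :
  is_FS lo hi -> precise lo hi -> computable_FS lo hi ->
  random CH lo hi om -> 0 <= a -> a <= b -> b <= 1 ->
  random CH (fun _ => a) (fun _ => b) om ->
  Rbar_le (LimSup_seq (fun n => hi (prefix om n))) (Finite b).
Proof.
  intros Hfs Hpr [Hcl _] Rphi Ha Hab Hb1 Rab.
  apply Rbar_not_lt_le. intro Hlt.
  pose proof (LimSup_le1 (fun n => hi (prefix om n)) (fun n => proj2 (proj2 (Hfs _)))) as Hge.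
  pose proof (LimSup_gt_io (fun n => hi (prefix om n))) as Hio.
  destruct (LimSup_seq (fun n => hi (prefix om n))) as [l| |]; simpl in Hlt, Hge; try contradiction.
  destruct (rat_between b l ltac:(lra)) as [t [Qt Ht]].
  set (c' := (t + l) / 2).
  set (c := (b + t) / 2).
  destruct (small_pow (Rmin (c' - t) (t - c))) as [N HN].
  { apply Rmin_glb_lt; unfold c', c; lra. }
  pose proof (Rmin_l (c' - t) (t - c)). pose proof (Rmin_r (c' - t) (t - c)).
  destruct Hcl as [q [[hn [hd [Hn [Hd Hq]]]] Hbnd]].
  destruct Qt as [tn [td [Htd Ht']]].
  destruct (selA_rec lo q hn hd N tn td Hn Hd Htd Hq) as [hS [HP HS]].
  rewrite <- Ht' in HS.
  set (S := selA q N t) in *.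
  assert (Hinf : forall N0, exists n, (N0 <= n)%nat /\ S (prefix om n) = true).
  { intros N0. destruct (Hio c' ltac:(simpl; unfold c'; lra) N0) as [n [Hn0 Hlo]].
    exists n. split; auto. unfold S, selA. destruct (Rlt_dec t (q (prefix om n) N)); auto.
    exfalso. apply n0. specialize (Hbnd (prefix om n) N). rewrite <- (Hpr _) in Hlo.
    apply Rabs_def2 in Hbnd. lra. }
  assert (Hsel : forall s, S s = true -> c < lo s).
  { intros s Hs.
    unfold S, selA in Hs. destruct (Rlt_dec t (q s N)) as [Hl|]; [|discriminate].
    specialize (Hbnd s N). apply Rabs_def2 in Hbnd. lra. }
  pose proof (count_inf S om Hinf) as Hc.
  destruct (Rphi S (sel_rec_of hS S HP HS) Hc) as [R1 _].
  destruct (Rab S (sel_rec_of hS S HP HS) Hc) as [_ R2].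
  assert (Hac : 0 < c - b) by (unfold c; lra).
  destruct (LimSup_lt_ev _ ((c - b) / 2) (Rbar_le_lt_trans _ (Finite 0) (Finite ((c - b) / 2)) R2 ltac:(simpl; lra))) as [N1 HN1].
  destruct (count_ev_pos S om Hc) as [N2 HN2].
  destruct (LimInf_gt_ev _ (- ((c - b) / 2)) (Rbar_lt_le_trans (Finite (- ((c - b) / 2))) (Finite 0) _ ltac:(simpl; lra) R1)) as [N3 HN3].
  specialize (HN1 (N1 + N2 + N3)%nat ltac:(lia)). specialize (HN2 (N1 + N2 + N3)%nat ltac:(lia)).
  specialize (HN3 (N1 + N2 + N3)%nat ltac:(lia)). simpl in HN1, HN3.
  assert (Hcmp := sel_sum_cmp S (fun _ => b) lo (c - b) om (N1 + N2 + N3)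
     (fun k _ Hk => ltac:(pose proof (Hsel _ Hk); lra))).
  pose proof (ratio_le _ _ _ _ HN2 Hcmp). lra.
Qed.

Lemma ratio_nonpos X C : X <= 0 -> 0 <= C -> X / C <= 0.
Proof.
  intros HX HC. destruct (Req_dec C 0) as [->|HC0].
  - unfold Rdiv. rewrite Rinv_0. lra.
  - unfold Rdiv. assert (0 < / C) by (apply Rinv_0_lt_compat; lra). nra.
Qed.
Lemma ratio_nonneg X C : 0 <= X -> 0 <= C -> 0 <= X / C.
Proof.
  intros HX HC. destruct (Req_dec C 0) as [->|HC0].
  - unfold Rdiv. rewrite Rinv_0. lra.
  - unfold Rdiv. assert (0 < / C) by (apply Rinv_0_lt_compat; lra). nra.
Qed.

Lemma sel_sum_1 S om n : sel_sum S (fun _ => 1) om n <= 0.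
Proof.
  induction n; [rewrite sel_sum_0; lra|]. rewrite sel_sum_S. unfold sel.
  destruct (S (prefix om n)), (om n); lra.
Qed.
Lemma sel_sum_0' S om n : 0 <= sel_sum S (fun _ => 0) om n.
Proof.
  induction n; [rewrite sel_sum_0; lra|]. rewrite sel_sum_S. unfold sel.
  destruct (S (prefix om n)), (om n); lra.
Qed.

Lemma CH_01 om : random CH (fun _ => 0) (fun _ => 1) om.
Proof.
  intros S _ _. split.
  - apply liminf_ge0_of. intros d Hd. exists 0%nat. intros n _.
    pose proof (ratio_nonneg _ _ (sel_sum_0' S om n) (sel_count_ge0 S om n)). lra.
  - apply limsup_le0_of. intros d Hd. exists 0%nat. intros n _.
    pose proof (ratio_nonpos _ _ (sel_sum_1 S om n) (sel_count_ge0 S om n)). lra.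
Qed.

Lemma CH_B_low lo hi om a :
  is_FS lo hi -> random CH lo hi om -> 0 <= a -> a <= 1 ->
  Rbar_lt (Finite a) (LimInf_seq (fun n => lo (prefix om n))) ->
  random CH (fun _ => a) (fun _ => 1) om.
Proof.
  intros Hfs Rphi Ha Ha1 Hlt S HSr Hc.
  destruct (Rphi S HSr Hc) as [R1 _].
  destruct (LimInf_gt_ev _ _ Hlt) as [K0 HK0].
  split.
  - apply liminf_ge0_of. intros d Hd.
    destruct (LimInf_gt_ev _ (- (d / 2)) (Rbar_lt_le_trans (Finite (- (d / 2))) (Finite 0) _ ltac:(simpl; lra) R1)) as [N1 HN1].
    destruct (count_ev_big S om (INR K0 + 1) Hc ltac:(pose proof (pos_INR K0); lra) (d / 2) ltac:(lra)) as [N2 HN2].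
    exists (N1 + N2)%nat. intros n Hn.
    specialize (HN1 n ltac:(lia)). destruct (HN2 n ltac:(lia)) as [HC HK]. simpl in HN1.
    assert (Hcmp := sel_sum_cmp_ev S lo (fun _ => a) om K0 n
      (fun k Hk _ => ltac:(pose proof (HK0 k Hk); lra))
      (fun s => ltac:(pose proof (Hfs s); lra))).
    pose proof (ratio_ge _ _ _ _ HC Hcmp).
    assert (INR K0 / sel_count S om n <= (INR K0 + 1) / sel_count S om n).
    { unfold Rdiv. apply Rmult_le_compat_r; [left; apply Rinv_0_lt_compat; lra| lra]. }
    lra.
  - apply limsup_le0_of. intros d Hd. exists 0%nat. intros n _.
    pose proof (ratio_nonpos _ _ (sel_sum_1 S om n) (sel_count_ge0 S om n)). lra.
Qed.

Lemma CH_B_high lo hi om b :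
  is_FS lo hi -> random CH lo hi om -> 0 <= b -> b <= 1 ->
  Rbar_lt (LimSup_seq (fun n => hi (prefix om n))) (Finite b) ->
  random CH (fun _ => 0) (fun _ => b) om.
Proof.
  intros Hfs Rphi Hb Hb1 Hlt S HSr Hc.
  destruct (Rphi S HSr Hc) as [_ R2].
  destruct (LimSup_lt_ev _ _ Hlt) as [K0 HK0].
  split.
  - apply liminf_ge0_of. intros d Hd. exists 0%nat. intros n _.
    pose proof (ratio_nonneg _ _ (sel_sum_0' S om n) (sel_count_ge0 S om n)). lra.
  - apply limsup_le0_of. intros d Hd.
    destruct (LimSup_lt_ev _ (d / 2) (Rbar_le_lt_trans _ (Finite 0) (Finite (d / 2)) R2 ltac:(simpl; lra))) as [N1 HN1].
    destruct (count_ev_big S om (INR K0 + 1) Hc ltac:(pose proof (pos_INR K0); lra) (d / 2) ltac:(lra)) as [N2 HN2].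
    exists (N1 + N2)%nat. intros n Hn.
    specialize (HN1 n ltac:(lia)). destruct (HN2 n ltac:(lia)) as [HC HK].
    assert (Hcmp := sel_sum_cmp_ev S (fun _ => b) hi om K0 n
      (fun k Hk _ => ltac:(pose proof (HK0 k Hk); lra))
      (fun s => ltac:(pose proof (Hfs s); lra))).
    pose proof (ratio_ge _ _ _ _ HC Hcmp).
    assert (INR K0 / sel_count S om n <= (INR K0 + 1) / sel_count S om n).
    { unfold Rdiv. apply Rmult_le_compat_r; [left; apply Rinv_0_lt_compat; lra| lra]. }
    lra.
Qed.

Lemma test01_bounded T : test_supermartingale (fun _ => 0) (fun _ => 1) T -> forall s, T s <= 1.
Proof.
  intros [Hs [Hn H0]] s. induction s as [|x s IH] using rev_ind; [lra|].
  pose proof (Hs s 0 ltac:(lra)) as A. pose proof (Hs s 1 ltac:(lra)) as B.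
  simpl in A, B. destruct x; lra.
Qed.

Lemma random_01 Rn om : random Rn (fun _ => 0) (fun _ => 1) om.
Proof.
  assert (K : forall T, test_supermartingale (fun _ => 0) (fun _ => 1) T -> ~ unbounded_on T om).
  { intros T HT Hu. unfold unbounded_on in Hu.
    pose proof (LimSup_le1 (fun n => T (prefix om n)) (fun n => test01_bounded T HT _)) as L.
    rewrite Hu in L. simpl in L. exact L. }
  destruct Rn; simpl.
  - intros [T [_ [HT Hu]]]. exact (K T HT Hu).
  - intros [D [_ [HT Hu]]]. exact (K _ HT Hu).
  - intros [T [_ [HT Hu]]]. exact (K T HT Hu).
  - apply CH_01.
Qed.

Definition extb (n0 : nat) (u s : list bool) : bool :=
  (n0 <=? length s)%nat && (if list_eq_dec Bool.bool_dec (firstn n0 s) u then true else false).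

Definition ll (S : list bool -> bool) (n0 : nat) (s : list bool) : list bool :=
  map (fun k => S (firstn k s)) (seq n0 (length s - n0)).

Fixpoint lead (l : list bool) : nat :=
  match l with true :: l' => Datatypes.S (lead l') | _ => 0%nat end.

Definition jf S n0 s : nat := (n0 + lead (ll S n0 s))%nat.

Lemma lead_le l : (lead l <= length l)%nat.
Proof. induction l as [|[|] l IH]; simpl; lia. Qed.

Lemma lead_snoc l b : lead (l ++ [b]) =
  if (lead l =? length l)%nat then (lead l + b2n b)%nat else lead l.
Proof.
  induction l as [|[|] l IH]; simpl.
  - destruct b; reflexivity.
  - rewrite IH. destruct (Nat.eqb_spec (lead l) (length l)); destruct (Nat.eqb_spec (Datatypes.S (lead l)) (Datatypes.S (length l))); try lia; reflexivity.
  - pose proof (lead_le l). destruct (length l); reflexivity.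
Qed.

Lemma firstn_app_le {A} k (s t : list A) : (k <= length s)%nat -> firstn k (s ++ t) = firstn k s.
Proof. intros H. rewrite firstn_app. replace (k - length s)%nat with 0%nat by lia. rewrite firstn_O, app_nil_r. reflexivity. Qed.

Lemma ll_snoc S n0 s x : (n0 <= length s)%nat -> ll S n0 (s ++ [x]) = ll S n0 s ++ [S s].
Proof.
  intros H. unfold ll. rewrite length_app. simpl length.
  replace (length s + 1 - n0)%nat with (Datatypes.S (length s - n0)) by lia.
  rewrite seq_S, map_app. simpl. f_equal.
  - apply map_ext_in. intros k Hk. apply in_seq in Hk. rewrite firstn_app_le by lia. reflexivity.
  - replace (n0 + (length s - n0))%nat with (length s) by lia.
    rewrite firstn_app_le, firstn_all by lia. reflexivity.
Qed.

Lemma length_ll S n0 s : length (ll S n0 s) = (length s - n0)%nat.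
Proof. unfold ll. rewrite length_map, length_seq. reflexivity. Qed.

Lemma jf_le S n0 s : (n0 <= length s)%nat -> (jf S n0 s <= length s)%nat.
Proof. intros. unfold jf. pose proof (lead_le (ll S n0 s)). rewrite length_ll in H0. lia. Qed.

Lemma jf_snoc S n0 s x : (n0 <= length s)%nat ->
  jf S n0 (s ++ [x]) = if ((jf S n0 s =? length s)%nat && S s)%bool then Datatypes.S (length s) else jf S n0 s.
Proof.
  intros H. unfold jf. rewrite ll_snoc, lead_snoc, length_ll by auto.
  pose proof (lead_le (ll S n0 s)). rewrite length_ll in H0.
  destruct (Nat.eqb_spec (lead (ll S n0 s)) (length s - n0)); destruct (Nat.eqb_spec (n0 + lead (ll S n0 s)) (length s));
  try lia; destruct (S s); simpl; lia.
Qed.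

Lemma extb_true n0 u s : extb n0 u s = true <-> (n0 <= length s)%nat /\ firstn n0 s = u.
Proof.
  unfold extb. rewrite andb_true_iff, Nat.leb_le.
  destruct (list_eq_dec bool_dec (firstn n0 s) u); split; intros [A B]; auto; congruence.
Qed.

Lemma extb_snoc n0 u s x : extb n0 u (s ++ [x]) = true ->
  extb n0 u s = true \/ (s ++ [x] = u /\ length (s ++ [x]) = n0).
Proof.
  rewrite !extb_true. intros [H1 H2]. rewrite length_app in *. simpl in *.
  destruct (le_lt_dec n0 (length s)).
  - left. split; auto. rewrite firstn_app_le in H2; auto.
  - right. rewrite firstn_all2 in H2 by (rewrite length_app; simpl; lia). split; auto. lia.
Qed.

Lemma extb_snoc_keep n0 u s x : extb n0 u s = true -> extb n0 u (s ++ [x]) = true.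
Proof.
  rewrite !extb_true. intros [H1 H2]. rewrite length_app. split; [lia|].
  rewrite firstn_app_le; auto.
Qed.

Lemma jf_u S n0 u : length u = n0 -> jf S n0 u = n0.
Proof. intros H. unfold jf, ll. rewrite H, Nat.sub_diag. simpl. lia. Qed.

Lemma firstn_prefix om k n : (k <= n)%nat -> firstn k (prefix om n) = prefix om k.
Proof.
  intros H. unfold prefix. rewrite firstn_map. f_equal.
  replace n with (k + (n - k))%nat by lia. rewrite seq_app, firstn_app.
  rewrite length_seq, Nat.sub_diag, firstn_O, app_nil_r, firstn_all2 by (rewrite length_seq; lia). reflexivity.
Qed.

Lemma length_prefix om n : length (prefix om n) = n.
Proof. unfold prefix. rewrite length_map, length_seq. reflexivity. Qed.

Lemma lead_all l : (forall b, In b l -> b = true) -> lead l = length l.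
Proof. induction l as [|[|] l IH]; simpl; intros H; auto. specialize (H false (or_introl eq_refl)). discriminate. Qed.

Lemma jf_prefix S n0 om n : (n0 <= n)%nat -> (forall k, (n0 <= k)%nat -> S (prefix om k) = true) ->
  jf S n0 (prefix om n) = n.
Proof.
  intros Hn HS. unfold jf. rewrite lead_all.
  - rewrite length_ll, length_prefix. lia.
  - intros b Hb. unfold ll in Hb. apply in_map_iff in Hb. destruct Hb as [k [<- Hk]].
    apply in_seq in Hk. rewrite length_prefix in Hk. rewrite firstn_prefix by lia. apply HS. lia.
Qed.

Lemma extb_prefix n0 om n : (n0 <= n)%nat -> extb n0 (prefix om n0) (prefix om n) = true.
Proof. intros H. apply extb_true. rewrite length_prefix, firstn_prefix; auto. Qed.

Lemma extb_nil n0 u : (1 <= n0)%nat -> extb n0 u [] = false.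
Proof. intros H. unfold extb. simpl. destruct n0; [lia|reflexivity]. Qed.

Definition Tstop S n0 u (r : R) (T : list bool -> R) (s : list bool) : R :=
  if extb n0 u s then r * T (firstn (jf S n0 s) s) else 1.

Section Stop.
Variables (S : list bool -> bool) (n0 : nat) (u : list bool) (r : R) (T : list bool -> R)
  (L H : list bool -> R) (A B : R).
Hypothesis Hn0 : (1 <= n0)%nat.
Hypothesis Hu : length u = n0.
Hypothesis Hr : 0 < r.
Hypothesis HrT : r * T u <= 1.
Hypothesis HT : test_supermartingale (fun _ => A) (fun _ => B) T.
Hypothesis HLH : forall s, 0 <= L s /\ L s <= H s /\ H s <= 1.
Hypothesis HSel : forall s, S s = true -> forall p, L s <= p <= H s -> A <= p <= B.

Lemma Tstop_snoc_ext s x : extb n0 u s = true ->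
  Tstop S n0 u r T (s ++ [x]) =
  if ((jf S n0 s =? length s)%nat && S s)%bool then r * T (s ++ [x]) else Tstop S n0 u r T s.
Proof.
  intros E. unfold Tstop. rewrite (extb_snoc_keep _ _ _ _ E), E.
  apply extb_true in E. destruct E as [E1 E2].
  rewrite jf_snoc by auto.
  pose proof (jf_le S n0 s E1).
  destruct (Nat.eqb_spec (jf S n0 s) (length s)); destruct (S s); cbn [andb]; auto;
  first [ rewrite firstn_all2 by (rewrite length_app; simpl; lia); reflexivity
        | rewrite firstn_app_le by lia; reflexivity ].
Qed.

Lemma Tstop_le1_nonext s : extb n0 u s = false -> forall x, Tstop S n0 u r T (s ++ [x]) <= 1.
Proof.
  intros E x. unfold Tstop at 1. destruct (extb n0 u (s ++ [x])) eqn:E'; [|lra].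
  destruct (extb_snoc _ _ _ _ E') as [C|[C1 C2]]; [congruence|].
  rewrite C1, jf_u, <- Hu, firstn_all by auto. lra.
Qed.

Lemma Tstop_test : test_supermartingale L H (Tstop S n0 u r T).
Proof.
  destruct HT as [HTs [HTn HT0]].
  split; [|split].
  - intros s p Hp. pose proof (HLH s) as Hl.
    destruct (extb n0 u s) eqn:E.
    + rewrite !Tstop_snoc_ext by auto.
      destruct (Nat.eqb_spec (jf S n0 s) (length s)); destruct (S s) eqn:ES; simpl; try lra.
      unfold Tstop. rewrite E, e, firstn_all.
      specialize (HTs s p (HSel s ES p Hp)). simpl in HTs. nra.
    + pose proof (Tstop_le1_nonext s E true). pose proof (Tstop_le1_nonext s E false).
      assert (E1 : Tstop S n0 u r T s = 1) by (unfold Tstop; rewrite E; auto).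
      rewrite E1. nra.
  - intros s. unfold Tstop. destruct (extb n0 u s); [|lra].
    pose proof (HTn (firstn (jf S n0 s) s)). nra.
  - unfold Tstop. rewrite extb_nil; auto.
Qed.

Lemma Tstop_prefix om n : u = prefix om n0 -> (forall k, (n0 <= k)%nat -> S (prefix om k) = true) ->
  (n0 <= n)%nat -> Tstop S n0 u r T (prefix om n) = r * T (prefix om n).
Proof.
  intros -> HS Hn. unfold Tstop. rewrite extb_prefix, jf_prefix; auto. rewrite firstn_all2 by (rewrite length_prefix; lia). auto.
Qed.

Lemma Tstop_unb om : u = prefix om n0 -> (forall k, (n0 <= k)%nat -> S (prefix om k) = true) ->
  unbounded_on T om -> unbounded_on (Tstop S n0 u r T) om.
Proof.
  intros Eu HS Hunb. unfold unbounded_on in *. apply unbounded_intro. intros M N.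
  pose proof (LimSup_c (fun n => T (prefix om n))) as Lc. rewrite Hunb in Lc. simpl in Lc.
  destruct (Lc (M / r) (N + n0)%nat) as [n [Hn HM]].
  exists n. split; [lia|]. rewrite Tstop_prefix by (auto; lia).
  apply (Rmult_lt_compat_l r) in HM; auto. unfold Rdiv in HM.
  rewrite <- Rmult_assoc, (Rmult_comm r M), Rmult_assoc, Rinv_r, Rmult_1_r in HM; lra.
Qed.

End Stop.

Definition actb S n0 u s : bool := (extb n0 u s && (jf S n0 s =? length s)%nat && S s)%bool.
Definition Dstop S n0 u (D : list bool -> bool -> R) : list bool -> bool -> R :=
  fun s x => if actb S n0 u s then D s x else 1.

Section DStop.
Variables (S : list bool -> bool) (n0 : nat) (u : list bool) (D : list bool -> bool -> R)
  (L H : list bool -> R) (A B : R).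
Hypothesis Hn0 : (1 <= n0)%nat.
Hypothesis Hu : length u = n0.
Hypothesis HT : test_supermartingale (fun _ => A) (fun _ => B) (Dcirc D).
Hypothesis HTu : 0 < Dcirc D u.
Hypothesis HLH : forall s, 0 <= L s /\ L s <= H s /\ H s <= 1.
Hypothesis HSel : forall s, S s = true -> forall p, L s <= p <= H s -> A <= p <= B.

Let D' := Dstop S n0 u D.

Lemma W1 s : extb n0 u s = false -> Dcirc D' s = 1.
Proof.
  induction s as [|x s IH] using rev_ind; intros E; [reflexivity|].
  rewrite Dcirc_app.
  assert (E0 : extb n0 u s = false).
  { destruct (extb n0 u s) eqn:E1; auto. rewrite (extb_snoc_keep _ _ _ x E1) in E. discriminate. }
  rewrite IH by auto. unfold D', Dstop, actb. rewrite E0. simpl. lra.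
Qed.

Lemma W2 s : extb n0 u s = true -> jf S n0 s = length s -> Dcirc D s = Dcirc D u * Dcirc D' s.
Proof.
  induction s as [|x s IH] using rev_ind; intros E J.
  - rewrite extb_nil in E; auto; discriminate.
  - destruct (extb_snoc _ _ _ _ E) as [E1|[E1 E2]].
    + pose proof (extb_true n0 u s) as [Q _]. destruct (Q E1) as [Q1 _].
      rewrite jf_snoc in J by auto. rewrite length_app in J. simpl in J.
      pose proof (jf_le S n0 s Q1).
      destruct (Nat.eqb_spec (jf S n0 s) (length s)); destruct (S s) eqn:ES; simpl in J; try lia.
      rewrite !Dcirc_app, IH by auto. unfold D', Dstop, actb. rewrite E1, ES.
      rewrite (proj2 (Nat.eqb_eq _ _) e). simpl. ring.
    + assert (E0 : extb n0 u s = false).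
      { destruct (extb n0 u s) eqn:E3; auto. apply extb_true in E3. rewrite length_app in E2.
        simpl in E2. lia. }
      assert (K : Dcirc D' (s ++ [x]) = 1).
      { rewrite Dcirc_app, (W1 s E0). unfold D', Dstop, actb. rewrite E0. simpl. ring. }
      rewrite K, E1. ring.
Qed.

Lemma W4 s : 0 <= Dcirc D' s.
Proof.
  destruct HT as [HTs [HTn HT0]].
  induction s as [|x s IH] using rev_ind; [rewrite Dcirc_nil; lra|].
  rewrite Dcirc_app. unfold D' at 2, Dstop.
  destruct (actb S n0 u s) eqn:Ea; [|lra].
  destruct (Req_dec (Dcirc D' s) 0) as [Z|Z]; [rewrite Z; lra|].
  unfold actb in Ea. apply andb_true_iff in Ea as [Ea Es]. apply andb_true_iff in Ea as [Ee Ej].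
  apply Nat.eqb_eq in Ej.
  pose proof (W2 s Ee Ej) as W. pose proof (HTn (s ++ [x])) as P. rewrite Dcirc_app, W in P.
  assert (0 < Dcirc D' s) by lra.
  assert (0 <= D s x).
  { apply (Rmult_le_reg_l (Dcirc D u * Dcirc D' s)); [nra|]. lra. }
  nra.
Qed.

Lemma Dstop_test : test_supermartingale L H (Dcirc D').
Proof.
  pose proof HT as [HTs [HTn HT0]].
  split; [|split].
  - intros s p Hp. rewrite !Dcirc_app.
    change (D' s true) with (if actb S n0 u s then D s true else 1).
    change (D' s false) with (if actb S n0 u s then D s false else 1).
    pose proof (HLH s). pose proof (W4 s).
    destruct (actb S n0 u s) eqn:Ea; [|lra].
    destruct (Req_dec (Dcirc D' s) 0) as [Z|Z]; [rewrite Z; lra|].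
    unfold actb in Ea. apply andb_true_iff in Ea as [Ea Es]. apply andb_true_iff in Ea as [Ee Ej].
    apply Nat.eqb_eq in Ej.
    pose proof (W2 s Ee Ej) as W.
    specialize (HTs s p (HSel s Es p Hp)). simpl in HTs. rewrite !Dcirc_app, W in HTs.
    assert (0 < Dcirc D' s) by lra.
    assert (K : p * D s true + (1 - p) * D s false - 1 <= 0).
    { apply (Rmult_le_reg_l (Dcirc D u * Dcirc D' s)); [nra|]. nra. }
    nra.
  - apply W4.
  - reflexivity.
Qed.

Lemma Dstop_unb om : u = prefix om n0 -> (forall k, (n0 <= k)%nat -> S (prefix om k) = true) ->
  unbounded_on (Dcirc D) om -> unbounded_on (Dcirc D') om.
Proof.
  intros Eu HS Hunb. unfold unbounded_on in *. apply unbounded_intro. intros M N.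
  pose proof (LimSup_c (fun n => Dcirc D (prefix om n))) as Lc. rewrite Hunb in Lc. simpl in Lc.
  destruct (Lc (M * Dcirc D u) (N + n0)%nat) as [n [Hn HM]].
  exists n. split; [lia|].
  assert (Ee : extb n0 u (prefix om n) = true) by (rewrite Eu; apply extb_prefix; lia).
  assert (Ej : jf S n0 (prefix om n) = length (prefix om n)) by (rewrite length_prefix; apply jf_prefix; auto; lia).
  rewrite (W2 _ Ee Ej) in HM.
  apply (Rmult_lt_reg_l (Dcirc D u)); auto. lra.
Qed.

End DStop.

Lemma code_inj s t : code_sit s = code_sit t -> s = t.
Proof.
  revert t; induction s as [|x s IH]; intros [|y t]; simpl; intros H; auto.
  - destruct y; lia.
  - destruct x; lia.
  - destruct x, y; try lia; f_equal; apply IH; lia.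
Qed.

Definition leadN (g : nat -> nat -> nat) (n c : nat) : nat :=
  rec1 (fun _ => 0%nat) (fun v => nth 1 v 0 + eqn (nth 1 v 0) (nth 0 v 0) * g (nth 0 v 0) (nth 2 v 0))%nat n c.

Lemma PR2_leadN g : PR2 g -> PR2 (leadN g).
Proof.
  intros Hg. unfold leadN. apply PR_rec1; [prd|].
  apply (PR2_app Nat.add); [exact PR2_add|prd|].
  apply (PR2_app Nat.mul); [exact PR2_mul|prd|].
  apply (PR2_app g); [exact Hg|prd|prd].
Qed.

Lemma leadN_spec g c l : (forall i, (i < length l)%nat -> g i c = b2n (nth i l false)) ->
  leadN g (length l) c = lead l.
Proof.
  induction l as [|b l IH] using rev_ind; intros H; [reflexivity|].
  rewrite length_app. simpl length. rewrite Nat.add_1_r.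
  unfold leadN. cbn [rec1 nth]. fold (leadN g (length l) c).
  rewrite IH by (intros i Hi; rewrite H by (rewrite length_app; simpl; lia); rewrite app_nth1 by lia; reflexivity).
  rewrite lead_snoc, eqn_spec, H by (rewrite length_app; simpl; lia).
  rewrite app_nth2, Nat.sub_diag by lia. simpl nth.
  destruct (lead l =? length l)%nat; lia.
Qed.

Definition extN (n0 cu c : nat) : nat := ((1 - ltn (len c) n0) * eqn (pcode c n0) cu)%nat.
Lemma extN_spec n0 u s : extN n0 (code_sit u) (code_sit s) = b2n (extb n0 u s).
Proof.
  unfold extN, extb. rewrite ltn_spec, eqn_spec, len_spec, pcode_spec.
  destruct (Nat.ltb_spec (length s) n0); destruct (Nat.leb_spec n0 (length s)); try lia; simpl.
  - reflexivity.
  - destruct (Nat.eqb_spec (code_sit (firstn n0 s)) (code_sit u)) as [e|e];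
    destruct (list_eq_dec bool_dec (firstn n0 s) u); simpl; auto.
    + apply code_inj in e. congruence.
    + subst. congruence.
Qed.

Definition jN (hS : nat -> nat) (n0 c : nat) : nat :=
  (n0 + leadN (fun i c => hS (pcode c (n0 + i))) (len c - n0) c)%nat.

Lemma jN_spec hS S n0 s : (forall s, hS (code_sit s) = b2n (S s)) -> jN hS n0 (code_sit s) = jf S n0 s.
Proof.
  intros HS. unfold jN, jf. f_equal. rewrite len_spec, <- (length_ll S n0 s).
  apply leadN_spec. intros i Hi. rewrite length_ll in Hi. unfold ll.
  rewrite (nth_indep _ false ((fun k => S (firstn k s)) 0%nat)) by (rewrite length_map, length_seq; lia).
  rewrite (map_nth (fun k => S (firstn k s)) (seq n0 (length s - n0)) 0%nat i), seq_nth by lia. rewrite pcode_spec, HS. reflexivity.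
Qed.

Lemma PR_jN hS n0 : PR1 hS -> PR1 (jN hS n0).
Proof.
  intros H. unfold PR1, jN.
  apply (PR2_app Nat.add); [exact PR2_add|prd|].
  apply (PR2_app (leadN (fun i c => hS (pcode c (n0 + i))))); [|prd|prd].
  apply PR2_leadN. unfold PR2. prd.
Qed.

Lemma PR_extN n0 cu : PR1 (extN n0 cu).
Proof. unfold PR1, extN. prd. Qed.

(* scaling a rational code by rn/rd *)
Definition Nsc (rn num : nat) : nat := cond (mod2 num) (2 * rn * ((num + 1) / 2) - 1) (rn * num).

Lemma zz_Nsc rn num : (1 <= rn)%nat -> zz (Nsc rn num) = (Z.of_nat rn * zz num)%Z.
Proof.
  intros Hr. unfold Nsc, cond.
  destruct (mod2_cases num) as [[E1 [E2 E3]]|[E1 [E2 E3]]]; rewrite E1.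
  - replace (0 * (2 * rn * ((num + 1) / 2) - 1) + (1 - 0) * (rn * num))%nat with (2 * (rn * (num / 2)))%nat by lia.
    rewrite zz_even, (zz_evenv num E2). lia.
  - assert (N0 : num <> 0%nat) by (intro; subst; discriminate).
    unfold zz at 2. rewrite E2.
    set (y := ((num + 1) / 2)%nat) in *.
    assert (P : (1 <= y)%nat) by lia.
    assert (Pz : (1 <= rn * y)%nat) by nia.
    replace (1 * (2 * rn * y - 1) + (1 - 1) * (rn * num))%nat with (2 * (rn * y - 1) + 1)%nat by nia.
    unfold zz. rewrite Nat.even_add, Nat.even_mul.
    replace (Bool.eqb (Nat.even 2 || Nat.even (rn * y - 1)) (Nat.even 1)) with false by reflexivity.
    rewrite (div2_eq _ (rn * y)) by nia. rewrite Nat2Z.inj_mul. lia.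
Qed.

Lemma qval_scale rn rd num den : (1 <= rn)%nat -> (1 <= rd)%nat ->
  qval (Nsc rn num) (rd * (den + 1) - 1) = INR rn / INR rd * qval num den.
Proof.
  intros Hn Hd. unfold qval. rewrite zz_Nsc by auto.
  rewrite mult_IZR, <- INR_IZR_INZ.
  replace (S (rd * (den + 1) - 1)) with (rd * S den)%nat by lia. rewrite mult_INR.
  assert (0 < INR rd) by (apply lt_0_INR; lia). assert (0 < INR (S den)) by (apply lt_0_INR; lia).
  field. lra.
Qed.

Lemma qval_one : qval 2 0 = 1.
Proof. unfold qval. simpl. unfold zz. simpl. lra. Qed.

Lemma PR2_Nsc : PR2 Nsc.
Proof. unfold PR2, Nsc, mod2. prd. Qed.
Hint Resolve PR2_Nsc : prdb.

Lemma cond_b2n b x y : cond (b2n b) x y = if b then x else y.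
Proof. unfold cond; destruct b; simpl; lia. Qed.

Lemma Un_cv_const c : Un_cv (fun _ => c) c.
Proof. intros e He. exists 0%nat. intros. unfold R_dist. rewrite Rminus_diag, Rabs_R0. auto. Qed.

Lemma rq_stop S hS n0 u rn rd qT :
  PR1 hS -> (forall s, hS (code_sit s) = b2n (S s)) -> (1 <= rn)%nat -> (1 <= rd)%nat ->
  recursive_Q code_sit qT ->
  recursive_Q code_sit (fun s k => if extb n0 u s then INR rn / INR rd * qT (firstn (jf S n0 s) s) k else 1).
Proof.
  intros HP HS Hrn Hrd [hn [hd [Hn [Hd Hq]]]].
  apply rec_PR1 in Hn, Hd.
  assert (HE : PR1 (extN n0 (code_sit u))) by apply PR_extN.
  assert (HJ : PR1 (jN hS n0)) by (apply PR_jN; auto).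
  exists (fun P => cond (extN n0 (code_sit u) (unp1 P))
                   (Nsc rn (hn (npair (pcode (unp1 P) (jN hS n0 (unp1 P))) (unp2 P)))) 2)%nat.
  exists (fun P => cond (extN n0 (code_sit u) (unp1 P))
                   (rd * (hd (npair (pcode (unp1 P) (jN hS n0 (unp1 P))) (unp2 P)) + 1) - 1) 0)%nat.
  split; [|split].
  - apply PR1_rec. unfold PR1. prd.
  - apply PR1_rec. unfold PR1. prd.
  - intros s k. rewrite unp1_npair, unp2_npair, extN_spec, (jN_spec hS S) by auto.
    rewrite pcode_spec, !cond_b2n.
    destruct (extb n0 u s).
    + rewrite qval_scale by auto. rewrite Hq. reflexivity.
    + rewrite qval_one. reflexivity.
Qed.

Lemma Tstop_lsc S hS n0 u rn rd T :
  PR1 hS -> (forall s, hS (code_sit s) = b2n (S s)) -> (1 <= rn)%nat -> (1 <= rd)%nat ->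
  lower_semicomputable code_sit T ->
  lower_semicomputable code_sit (Tstop S n0 u (INR rn / INR rd) T).
Proof.
  intros HP HS Hrn Hrd [qT [HqT [Hmon Hcv]]].
  assert (Hr : 0 < INR rn / INR rd).
  { unfold Rdiv. apply Rmult_lt_0_compat; [apply lt_0_INR; lia| apply Rinv_0_lt_compat, lt_0_INR; lia]. }
  exists (fun s k => if extb n0 u s then INR rn / INR rd * qT (firstn (jf S n0 s) s) k else 1).
  split; [|split].
  - apply (rq_stop S hS); auto.
  - intros s k. destruct (extb n0 u s); [|lra].
    apply Rmult_le_compat_l; [lra|]. apply Hmon.
  - intros s. unfold Tstop. destruct (extb n0 u s).
    + apply CV_mult; [apply Un_cv_const| apply Hcv].
    + apply Un_cv_const.
Qed.

Lemma Tstop_comp S hS n0 u rn rd T :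
  PR1 hS -> (forall s, hS (code_sit s) = b2n (S s)) -> (1 <= rn)%nat -> (1 <= rd)%nat ->
  INR rn / INR rd <= 1 ->
  computable_map code_sit T ->
  computable_map code_sit (Tstop S n0 u (INR rn / INR rd) T).
Proof.
  intros HP HS Hrn Hrd Hr1 [qT [HqT Hb]].
  assert (Hr : 0 < INR rn / INR rd).
  { unfold Rdiv. apply Rmult_lt_0_compat; [apply lt_0_INR; lia| apply Rinv_0_lt_compat, lt_0_INR; lia]. }
  exists (fun s k => if extb n0 u s then INR rn / INR rd * qT (firstn (jf S n0 s) s) k else 1).
  split.
  - apply (rq_stop S hS); auto.
  - intros s k. unfold Tstop. destruct (extb n0 u s).
    + rewrite <- Rmult_minus_distr_l, Rabs_mult, (Rabs_right (INR rn / INR rd)) by lra.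
      specialize (Hb (firstn (jf S n0 s) s) k). pose proof (Rabs_pos (T (firstn (jf S n0 s) s) - qT (firstn (jf S n0 s) s) k)).
      nra.
    + rewrite Rminus_diag, Rabs_R0. apply Rinv_0_lt_compat, pow_lt; lra.
Qed.

Definition actN (hS : nat -> nat) (n0 cu c : nat) : nat :=
  (extN n0 cu c * eqn (jN hS n0 c) (len c) * hS c)%nat.

Lemma actN_spec hS S n0 u s : (forall s, hS (code_sit s) = b2n (S s)) ->
  actN hS n0 (code_sit u) (code_sit s) = b2n (actb S n0 u s).
Proof.
  intros HS. unfold actN, actb. rewrite extN_spec, (jN_spec hS S), eqn_spec, len_spec, HS by auto.
  destruct (extb n0 u s), (jf S n0 s =? length s)%nat, (S s); reflexivity.
Qed.

Lemma Dstop_lsc S hS n0 u D :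
  PR1 hS -> (forall s, hS (code_sit s) = b2n (S s)) ->
  lsc_multiplier D -> lsc_multiplier (Dstop S n0 u D).
Proof.
  intros HP HS [qD [[hn [hd [Hn [Hd Hq]]]] [Hmon Hcv]]].
  apply rec_PR1 in Hn, Hd.
  assert (HA : PR1 (actN hS n0 (code_sit u))).
  { unfold PR1, actN. assert (PR1 (extN n0 (code_sit u))) by apply PR_extN.
    assert (PR1 (jN hS n0)) by (apply PR_jN; auto). prd. }
  exists (fun p k => if actb S n0 u (fst p) then qD p k else 1).
  split; [|split].
  - exists (fun P => cond (actN hS n0 (code_sit u) (unp1 (unp1 P))) (hn P) 2)%nat.
    exists (fun P => cond (actN hS n0 (code_sit u) (unp1 (unp1 P))) (hd P) 0)%nat.
    split; [|split].
    + apply PR1_rec. unfold PR1. prd.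
    + apply PR1_rec. unfold PR1. prd.
    + intros [s x] k.
      assert (E : unp1 (unp1 (npair (code_sx (s, x)) k)) = code_sit s)
        by (rewrite unp1_npair; unfold code_sx; simpl; apply unp1_npair).
      rewrite E, (actN_spec hS S) by auto. simpl fst. rewrite !cond_b2n.
      destruct (actb S n0 u s).
      * apply Hq.
      * rewrite qval_one. reflexivity.
  - intros p k. destruct (actb S n0 u (fst p)); [apply Hmon|lra].
  - intros [s x]. unfold Dstop. simpl fst. simpl snd. destruct (actb S n0 u s).
    + apply (Hcv (s, x)).
    + apply Un_cv_const.
Qed.

Lemma GT Rn L H A B om S hS n0 :
  Rn <> CH -> (forall s, 0 <= L s /\ L s <= H s /\ H s <= 1) ->
  PR1 hS -> (forall s, hS (code_sit s) = b2n (S s)) -> (1 <= n0)%nat ->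
  (forall k, (n0 <= k)%nat -> S (prefix om k) = true) ->
  (forall s, S s = true -> forall p, L s <= p <= H s -> A <= p <= B) ->
  random Rn L H om -> random Rn (fun _ => A) (fun _ => B) om.
Proof.
  intros HRn HLH HP HS Hn0 Hio HSel Rphi.
  set (u := prefix om n0).
  assert (Hu : length u = n0) by apply length_prefix.
  assert (Rsel : forall T : list bool -> R, 0 <= T u -> exists rn rd, (1 <= rn)%nat /\ (1 <= rd)%nat /\
            0 < INR rn / INR rd /\ INR rn / INR rd <= 1 /\ INR rn / INR rd * T u <= 1).
  { intros T HTu. assert (0 < / (1 + T u)) by (apply Rinv_0_lt_compat; lra).
    destruct (rat_between 0 (/ (1 + T u)) ltac:(lra)) as [r [[rn [rd [Hrd Er]]] Hr]].
    exists rn, rd. subst r.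
    assert (rn <> 0)%nat by (intro; subst rn; simpl in Hr; unfold Rdiv in Hr; lra).
    split; [lia|]. split; auto. split; [lra|].
    assert (/ (1 + T u) <= 1) by (rewrite <- Rinv_1; apply Rinv_le_contravar; lra).
    split; [lra|].
    destruct Hr as [_ Hr]. apply (Rmult_lt_compat_r (1 + T u)) in Hr; [|lra]. rewrite Rinv_l in Hr by lra. nra. }
  destruct Rn; simpl in *.
  - intros [T [Hl [HT Hunb]]]. pose proof HT as [_ [HTn _]].
    destruct (Rsel T (HTn u)) as [rn [rd [Hrn [Hrd [Hr0 [Hr1 HrT]]]]]].
    apply Rphi. exists (Tstop S n0 u (INR rn / INR rd) T). split; [|split].
    + apply (Tstop_lsc S hS); auto.
    + apply (Tstop_test S n0 u _ T L H A B); auto.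
    + apply (Tstop_unb S n0 u _ T); auto.
  - intros [D [Hm [HT Hunb]]]. pose proof HT as [_ [HTn _]].
    assert (HTu : 0 < Dcirc D u).
    { destruct (HTn u) as [P|Z]; auto. exfalso.
      assert (Zn : forall n, (n0 <= n)%nat -> Dcirc D (prefix om n) = 0).
      { induction n; intros Hn.
        - lia.
        - destruct (Nat.eq_dec n0 (Datatypes.S n)) as [e|e].
          + rewrite <- e. unfold u in Z. lra.
          + rewrite prefix_S, Dcirc_app, IHn by lia. lra. }
      unfold unbounded_on in Hunb.
      pose proof (LimSup_c (fun n => Dcirc D (prefix om n))) as Lc. rewrite Hunb in Lc. simpl in Lc.
      destruct (Lc 0 n0) as [n [Hn Hp]]. rewrite Zn in Hp by auto. lra. }
    apply Rphi. exists (Dstop S n0 u D). split; [|split].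
    + apply (Dstop_lsc S hS); auto.
    + apply (Dstop_test S n0 u D L H A B); auto.
    + apply (Dstop_unb S n0 u D); auto.
  - intros [T [Hl [HT Hunb]]]. pose proof HT as [_ [HTn _]].
    destruct (Rsel T (HTn u)) as [rn [rd [Hrn [Hrd [Hr0 [Hr1 HrT]]]]]].
    apply Rphi. exists (Tstop S n0 u (INR rn / INR rd) T). split; [|split].
    + apply (Tstop_comp S hS); auto.
    + apply (Tstop_test S n0 u _ T L H A B); auto.
    + apply (Tstop_unb S n0 u _ T); auto.
  - congruence.
Qed.

Lemma LimInf_le1 (u : nat -> R) : (forall n, u n <= 1) -> Rbar_le (LimInf_seq u) (Finite 1).
Proof.
  intros H. rewrite <- (LimInf_seq_const 1). apply LimInf_le. exists 0%nat. intros; auto.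
Qed.
Lemma LimSup_ge0 (u : nat -> R) : (forall n, 0 <= u n) -> Rbar_le (Finite 0) (LimSup_seq u).
Proof.
  intros H. rewrite <- (LimSup_seq_const 0). apply LimSup_le. exists 0%nat. intros; auto.
Qed.

Lemma B_low_nonCH Rn lo hi om a :
  Rn <> CH -> is_FS lo hi -> precise lo hi -> computable_FS lo hi ->
  random Rn lo hi om -> 0 <= a ->
  Rbar_lt (Finite a) (LimInf_seq (fun n => lo (prefix om n))) ->
  random Rn (fun _ => a) (fun _ => 1) om.
Proof.
  intros HRn Hfs Hpr [Hcl _] Rphi Ha Hlt.
  pose proof (LimInf_le1 (fun n => lo (prefix om n)) (fun n => ltac:(pose proof (Hfs (prefix om n)); lra))) as Hle.
  pose proof (LimInf_gt_ev (fun n => lo (prefix om n))) as Hev.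
  destruct (LimInf_seq (fun n => lo (prefix om n))) as [l| |]; simpl in Hlt, Hle; try contradiction.
  destruct (rat_between a l ltac:(lra)) as [t [Qt Ht]].
  set (a'' := (t + l) / 2).
  destruct (small_pow (Rmin (t - a) (a'' - t))) as [N HN].
  { apply Rmin_glb_lt; unfold a''; lra. }
  pose proof (Rmin_l (t - a) (a'' - t)). pose proof (Rmin_r (t - a) (a'' - t)).
  destruct Hcl as [q [[hn [hd [Hn [Hd Hq]]]] Hbnd]].
  destruct Qt as [tn [td [Htd Ht']]].
  destruct (selA_rec lo q hn hd N tn td Hn Hd Htd Hq) as [hS [HP HS]].
  rewrite <- Ht' in HS.
  destruct (Hev a'' ltac:(simpl; unfold a''; lra)) as [K0 HK0].
  apply (GT Rn lo hi a 1 om (selA q N t) hS (Datatypes.S K0) HRn Hfs HP HS).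
  - lia.
  - intros k Hk. specialize (HK0 k ltac:(lia)). unfold selA.
    destruct (Rlt_dec t (q (prefix om k) N)); auto. exfalso. apply n.
    specialize (Hbnd (prefix om k) N). apply Rabs_def2 in Hbnd. lra.
  - intros s Hs p Hp. rewrite <- (Hpr s) in Hp. assert (p = lo s) by lra. subst p.
    unfold selA in Hs. destruct (Rlt_dec t (q s N)) as [Hl|]; [|discriminate].
    specialize (Hbnd s N). apply Rabs_def2 in Hbnd. pose proof (Hfs s). lra.
  - exact Rphi.
Qed.

Lemma B_high_nonCH Rn lo hi om b :
  Rn <> CH -> is_FS lo hi -> precise lo hi -> computable_FS lo hi ->
  random Rn lo hi om -> b <= 1 ->
  Rbar_lt (LimSup_seq (fun n => hi (prefix om n))) (Finite b) ->
  random Rn (fun _ => 0) (fun _ => b) om.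
Proof.
  intros HRn Hfs Hpr [Hcl _] Rphi Hb Hlt.
  pose proof (LimSup_ge0 (fun n => hi (prefix om n)) (fun n => ltac:(pose proof (Hfs (prefix om n)); lra))) as Hle.
  pose proof (LimSup_lt_ev (fun n => hi (prefix om n))) as Hev.
  destruct (LimSup_seq (fun n => hi (prefix om n))) as [l| |]; simpl in Hlt, Hle; try contradiction.
  destruct (rat_between l b ltac:(lra)) as [t [Qt Ht]].
  set (b'' := (l + t) / 2).
  destruct (small_pow (Rmin (b - t) (t - b''))) as [N HN].
  { apply Rmin_glb_lt; unfold b''; lra. }
  pose proof (Rmin_l (b - t) (t - b'')). pose proof (Rmin_r (b - t) (t - b'')).
  destruct Hcl as [q [[hn [hd [Hn [Hd Hq]]]] Hbnd]].
  destruct Qt as [tn [td [Htd Ht']]].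
  destruct (selB_rec lo q hn hd N tn td Hn Hd Htd Hq) as [hS [HP HS]].
  rewrite <- Ht' in HS.
  destruct (Hev b'' ltac:(simpl; unfold b''; lra)) as [K0 HK0].
  apply (GT Rn lo hi 0 b om (selB q N t) hS (Datatypes.S K0) HRn Hfs HP HS).
  - lia.
  - intros k Hk. specialize (HK0 k ltac:(lia)). unfold selB. rewrite <- (Hpr _) in HK0.
    destruct (Rlt_dec (q (prefix om k) N) t); auto. exfalso. apply n.
    specialize (Hbnd (prefix om k) N). apply Rabs_def2 in Hbnd. lra.
  - intros s Hs p Hp. rewrite <- (Hpr s) in Hp. assert (p = lo s) by lra. subst p.
    unfold selB in Hs. destruct (Rlt_dec (q s N) t) as [Hl|]; [|discriminate].
    specialize (Hbnd s N). apply Rabs_def2 in Hbnd. pose proof (Hfs s). lra.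
  - exact Rphi.
Qed.

Theorem theorem1 (Rn : notion) (lo hi : list bool -> R) (om : nat -> bool) :
  is_FS lo hi -> precise lo hi -> computable_FS lo hi ->
  random Rn lo hi om ->
  forall x : R, in_I_R Rn om x <-> in_I_phi lo hi om x.
Proof.
  intros Hfs Hpr Hcomp Rphi x. split.
  - intros HI. split.
    + apply Rbar_not_lt_le. intros Hlt.
      destruct (Rlt_dec x 0) as [Hx|Hx].
      { destruct (HI 0 1 ltac:(lra) ltac:(lra) ltac:(lra) (random_01 Rn om)). lra. }
      pose proof (LimInf_le1 (fun n => lo (prefix om n)) (fun n => ltac:(pose proof (Hfs (prefix om n)); lra))) as Hle.
      destruct (LimInf_seq (fun n => lo (prefix om n))) as [l| |] eqn:E; simpl in Hlt, Hle; try contradiction.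
      set (a := (x + l) / 2).
      assert (Ra : random Rn (fun _ => a) (fun _ => 1) om).
      { destruct Rn.
        1-3: match goal with |- random ?R _ _ _ => apply (B_low_nonCH R lo hi om a) end; auto; try discriminate;
             [unfold a; lra | rewrite E; simpl; unfold a; lra].
        apply CH_B_low with (lo := lo) (hi := hi); auto; [unfold a; lra | unfold a; lra | rewrite E; simpl; unfold a; lra]. }
      destruct (HI a 1 ltac:(unfold a; lra) ltac:(unfold a; lra) ltac:(lra) Ra). unfold a in *. lra.
    + apply Rbar_not_lt_le. intros Hlt.
      destruct (Rlt_dec 1 x) as [Hx|Hx].
      { destruct (HI 0 1 ltac:(lra) ltac:(lra) ltac:(lra) (random_01 Rn om)). lra. }
      pose proof (LimSup_ge0 (fun n => hi (prefix om n)) (fun n => ltac:(pose proof (Hfs (prefix om n)); lra))) as Hle.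
      destruct (LimSup_seq (fun n => hi (prefix om n))) as [l| |] eqn:E; simpl in Hlt, Hle; try contradiction.
      set (b := (x + l) / 2).
      assert (Rb : random Rn (fun _ => 0) (fun _ => b) om).
      { destruct Rn.
        1-3: match goal with |- random ?R _ _ _ => apply (B_high_nonCH R lo hi om b) end; auto; try discriminate;
             [unfold b; lra | rewrite E; simpl; unfold b; lra].
        apply CH_B_high with (lo := lo) (hi := hi); auto; [unfold b; lra | unfold b; lra | rewrite E; simpl; unfold b; lra]. }
      destruct (HI 0 b ltac:(lra) ltac:(unfold b; lra) ltac:(unfold b; lra) Rb). unfold b in *. lra.
  - intros [H1 H2] a b Ha Hab Hb Rab. split.
    + assert (K : Rbar_le (Finite a) (LimInf_seq (fun n => lo (prefix om n)))).
      { destruct Rn.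
        - apply (A_low ML lo hi om a b); auto; discriminate.
        - apply (A_low wML lo hi om a b); auto; discriminate.
        - apply (A_low Defs.C lo hi om a b); auto; discriminate.
        - apply (CH_A_low lo hi om a b); auto. }
      pose proof (Rbar_le_trans _ _ _ K H1). simpl in H. exact H.
    + assert (K : Rbar_le (LimSup_seq (fun n => hi (prefix om n))) (Finite b)).
      { destruct Rn.
        - apply (A_high ML lo hi om a b); auto; discriminate.
        - apply (A_high wML lo hi om a b); auto; discriminate.
        - apply (A_high Defs.C lo hi om a b); auto; discriminate.
        - apply (CH_A_high lo hi om a b); auto. }
      pose proof (Rbar_le_trans _ _ _ H2 K). simpl in H. exact H.
Qed.
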